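(* Let $c$ be an oriented geodesic of $\mathbb{H}^2$ whose tail and head both lie in the limit set $\Lambda_{\Gamma_o}$. Let $(\ell_m)_{m\in\mathbb{Z}}$ be the leaves of $\mathcal{L}$ crossed by $c$, indexed in the order in which $c$ crosses them and each oriented so that $c$ crosses it from its right side to its left side, and suppose the indexing is chosen so that $\ell_0=\gamma_0e_0$ for some $\gamma_0\in\Gamma_o$. Then for every integer $n$, the oriented leaf $\ell_{2n}$ lies in the $\Gamma_o$-orbit of $e_0$; moreover, if $\gamma_n$ denotes the unique element of $\Gamma_o$ with $\ell_{2n}=\gamma_ne_0$, then $\gamma_{n+1}=\gamma_nw$ for some $w$ in $$W=\{R_*IR_*I,\ R_*IR_*^2I,\ R_*^2IR_*^2I,\ R_*^2IR_*I\}.$$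
   Context: Work in the upper half-plane model of $\mathbb{H}^2$. Let $\Delta_0$ be the ideal triangle with vertices $0,1,\infty$, $e_0$ the geodesic oriented from $\infty$ to $0$, and $I$ the order-2 rotation $z\mapsto-1/z$ (whose center lies on $e_0$). Let $\Delta$ be a hyperideal triangle (a region bounded by three pairwise disjoint geodesics with no common ideal endpoints) containing $\Delta_0$, having $e_0$ as a side, and invariant under an order-3 rotation $R_*$ that permutes its sides clockwise, chosen so that the orthogonal projection of the center of $R_*$ onto $e_0$ is the fixed point of $I$. Let $\Gamma=\langle I,R_*\rangle$ (a convex cocompact group isomorphic to $\mathrm{PSL}(2,\mathbb{Z})$), $\Gamma_o=\langle R_*,IR_*I\rangle$ its index-2 subgroup, and $\mathcal{L}$ the lamination formed by the $\Gamma$-images of the sides of $\Delta$; its leaves are geodesics, and $\Gamma_o$ acts simply transitively on unoriented leaves. Oriented leaves: the sides $R_*e_0$, $R_*^2e_0$ carry the orientations of the images of $e_0$. For an oriented geodesic, its left side is the half-plane on its left. *)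

(* Defs.v *)
From Stdlib Require Import Reals Lra ZArith List.
Open Scope R_scope.

(* A point x + i y of the upper half-plane (points used with y > 0). *)
Record pt := mkPt { px : R; py : R }.

Definition pI : pt := mkPt 0 1.

Inductive bpt := Fin (x : R) | Inf.

(** * Möbius transformations, as real 2x2 matrices [[a,b],[c,d]] : z |-> (az+b)/(cz+d).
    Elements of PSL(2,R) are matrices of determinant 1 up to sign ([peq]). *)
Record mob := mkMob { ma : R; mb : R; mc : R; md : R }.

Definition mdet (g : mob) : R := ma g * md g - mb g * mc g.

Definition mmul (g h : mob) : mob :=
  mkMob (ma g * ma h + mb g * mc h) (ma g * mb h + mb g * md h)
        (mc g * ma h + md g * mc h) (mc g * mb h + md g * md h).

Definition madj (g : mob) : mob := mkMob (md g) (- mb g) (- mc g) (ma g).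
Definition mneg (g : mob) : mob := mkMob (- ma g) (- mb g) (- mc g) (- md g).
Definition mid : mob := mkMob 1 0 0 1.

Definition peq (g h : mob) : Prop := g = h \/ g = mneg h.

Definition act_pt (g : mob) (z : pt) : pt :=
  let den := (mc g * px z + md g) ^ 2 + (mc g * py z) ^ 2 in
  mkPt (((ma g * px z + mb g) * (mc g * px z + md g) + ma g * mc g * py z ^ 2) / den)
       (mdet g * py z / den).

Definition act_bpt (g : mob) (u : bpt) : bpt :=
  match u with
  | Fin x => if Req_EM_T (mc g * x + md g) 0 then Inf
             else Fin ((ma g * x + mb g) / (mc g * x + md g))
  | Inf => if Req_EM_T (mc g) 0 then Inf else Fin (ma g / mc g)
  end.

Record geod := mkGeod { gtail : bpt; ghead : bpt }.

Definition act_geod (g : mob) (l : geod) : geod :=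
  mkGeod (act_bpt g (gtail l)) (act_bpt g (ghead l)).

Definition grev (l : geod) : geod := mkGeod (ghead l) (gtail l).

Definition same_unor (l l' : geod) : Prop := l = l' \/ l = grev l'.

(* Side function: positive on the left side of the oriented geodesic l,
   zero on l, negative on its right side. *)
Definition sidef (l : geod) (z : pt) : R :=
  match gtail l, ghead l with
  | Fin u, Fin v => (v - u) * ((px z - u) * (px z - v) + py z ^ 2)
  | Fin u, Inf => u - px z
  | Inf, Fin v => px z - v
  | Inf, Inf => 0
  end.

Definition on_geod (l : geod) (z : pt) : Prop := sidef l z = 0.
Definition left_of (l : geod) (z : pt) : Prop := 0 < sidef l z.
Definition right_of (l : geod) (z : pt) : Prop := sidef l z < 0.

(* Hyperbolic cosh of the distance between two points of H^2. *)
Definition hcosh (z w : pt) : R :=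
  1 + ((px z - px w) ^ 2 + (py z - py w) ^ 2) / (2 * py z * py w).

(** * Groups generated by finitely many elements (lists contain inverses) *)
Inductive gen (S : list mob) : mob -> Prop :=
  | gen_id : gen S mid
  | gen_mul : forall g s, gen S g -> In s S -> gen S (mmul g s).

(* Membership of a PSL(2,R) element (represented by any lift) in <S>. *)
Definition in_grp (S : list mob) (g : mob) : Prop :=
  exists h, gen S h /\ peq g h.

Definition Iinv : mob := mkMob 0 (-1) 1 0.

Definition e0 : geod := mkGeod Inf (Fin 0).

Definition Gamma_gens (Rs : mob) : list mob := Iinv :: madj Iinv :: Rs :: madj Rs :: nil.

Definition GammaO_gens (Rs : mob) : list mob :=
  Rs :: madj Rs :: mmul (mmul Iinv Rs) Iinv :: mmul (mmul Iinv (madj Rs)) Iinv :: nil.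

Definition sides (Rs : mob) : list geod :=
  e0 :: act_geod Rs e0 :: act_geod (mmul Rs Rs) e0 :: nil.

(* Rs is the rotation of angle theta (counterclockwise if theta > 0) about p:
   det Rs = 1, Rs p = p and the derivative (cp+d)^(-2) of Rs at p equals e^{i theta},
   i.e. (cp+d)^2 * e^{i theta} = 1. *)
Definition is_rotation (Rs : mob) (p : pt) (theta : R) : Prop :=
  mdet Rs = 1 /\ 0 < py p /\ act_pt Rs p = p /\
  let u := mc Rs * px p + md Rs in
  let v := mc Rs * py p in
  let A := u ^ 2 - v ^ 2 in
  let B := 2 * u * v in
  A * cos theta - B * sin theta = 1 /\ A * sin theta + B * cos theta = 0.

Definition closures_disjoint (l l' : geod) : Prop :=
  gtail l <> gtail l' /\ gtail l <> ghead l' /\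
  ghead l <> gtail l' /\ ghead l <> ghead l' /\
  ~ (exists z, 0 < py z /\ on_geod l z /\ on_geod l' z).

(* hDelta: the region bounded by the three sides, containing the center p. *)
Definition hDelta (Rs : mob) (p : pt) (z : pt) : Prop :=
  0 < py z /\ forall s, In s (sides Rs) -> 0 < sidef s z * sidef s p.

(* Delta_0 : the ideal triangle with vertices 0, 1, ∞. *)
Definition hDelta0 (z : pt) : Prop :=
  0 < py z /\ 0 < px z < 1 /\ 0 < px z * (px z - 1) + py z ^ 2.

Definition is_leaf (Rs : mob) (l : geod) : Prop :=
  exists g s, in_grp (Gamma_gens Rs) g /\ In s (sides Rs) /\ same_unor l (act_geod g s).

(* Convergence of a sequence of points of H^2 to an ideal point (Euclidean topology
   on the closed half-plane, with ∞ the point at infinity). *)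
Definition conv_to (z : nat -> pt) (xi : bpt) : Prop :=
  match xi with
  | Fin x => forall eps, 0 < eps -> exists N, forall k, (N <= k)%nat ->
               (px (z k) - x) ^ 2 + py (z k) ^ 2 < eps
  | Inf => forall K, exists N, forall k, (N <= k)%nat -> K < px (z k) ^ 2 + py (z k) ^ 2
  end.

Definition in_limit_set (S : list mob) (xi : bpt) : Prop :=
  exists g : nat -> mob, (forall k, in_grp S (g k)) /\ conv_to (fun k => act_pt (g k) pI) xi.

(* M parametrizes the oriented geodesic c: M is orientation preserving and sends
   the geodesic 0 -> ∞ onto c; c(s) := M (i e^s), s increasing from tail to head. *)
Definition param_of (c : geod) (M : mob) : Prop :=
  0 < mdet M /\ act_bpt M (Fin 0) = gtail c /\ act_bpt M Inf = ghead c.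

Definition cpt (M : mob) (s : R) : pt := act_pt M (mkPt 0 (exp s)).

Definition crosses_RL (M : mob) (l : geod) (s0 : R) : Prop :=
  on_geod l (cpt M s0) /\
  (forall s, s < s0 -> right_of l (cpt M s)) /\
  (forall s, s0 < s -> left_of l (cpt M s)).

Definition crossed (M : mob) (l : geod) : Prop :=
  (exists s, on_geod l (cpt M s)) /\ (exists s, ~ on_geod l (cpt M s)).

Definition Wset (Rs : mob) : list mob :=
  let R2 := mmul Rs Rs in
  mmul (mmul (mmul Rs Iinv) Rs) Iinv ::
  mmul (mmul (mmul Rs Iinv) R2) Iinv ::
  mmul (mmul (mmul R2 Iinv) R2) Iinv ::
  mmul (mmul (mmul R2 Iinv) Rs) Iinv :: nil.

(* Main.v *)
Require Import Defs.
From Stdlib Require Import Reals ZArith List.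
From Stdlib Require Import Lra Lia Classical.
Open Scope R_scope.


Lemma mob_eq : forall a b c d a' b' c' d', a = a' -> b = b' -> c = c' -> d = d' ->
  mkMob a b c d = mkMob a' b' c' d'.
Proof. intros; subst; reflexivity. Qed.

Lemma pt_eq : forall a b a' b', a = a' -> b = b' -> mkPt a b = mkPt a' b'.
Proof. intros; subst; reflexivity. Qed.

Ltac mobring := repeat match goal with g : mob |- _ => destruct g end;
  unfold mmul, madj, mneg, mid, mdet; simpl; apply mob_eq; ring.

Lemma mmul_assoc : forall a b c, mmul (mmul a b) c = mmul a (mmul b c).
Proof. intros; mobring. Qed.
Lemma mmul_mid_l : forall a, mmul mid a = a.
Proof. intros; mobring. Qed.
Lemma mmul_mid_r : forall a, mmul a mid = a.
Proof. intros; mobring. Qed.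
Lemma mdet_mmul : forall g h, mdet (mmul g h) = mdet g * mdet h.
Proof. intros [] []; unfold mdet, mmul; simpl; ring. Qed.
Lemma mdet_mneg : forall g, mdet (mneg g) = mdet g.
Proof. intros []; unfold mdet, mneg; simpl; ring. Qed.
Lemma mdet_madj : forall g, mdet (madj g) = mdet g.
Proof. intros []; unfold mdet, madj; simpl; ring. Qed.
Lemma mmul_madj_r : forall g, mmul g (madj g) = mkMob (mdet g) 0 0 (mdet g).
Proof. intros; mobring. Qed.
Lemma mmul_madj_l : forall g, mmul (madj g) g = mkMob (mdet g) 0 0 (mdet g).
Proof. intros; mobring. Qed.
Lemma mmul_mneg_l : forall g h, mmul (mneg g) h = mneg (mmul g h).
Proof. intros; mobring. Qed.
Lemma mmul_mneg_r : forall g h, mmul g (mneg h) = mneg (mmul g h).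
Proof. intros; mobring. Qed.
Lemma mneg_mneg : forall g, mneg (mneg g) = g.
Proof. intros; mobring. Qed.
Lemma madj_mmul : forall g h, madj (mmul g h) = mmul (madj h) (madj g).
Proof. intros; mobring. Qed.
Lemma madj_madj : forall g, madj (madj g) = g.
Proof. intros; mobring. Qed.
Lemma madj_mneg : forall g, madj (mneg g) = mneg (madj g).
Proof. intros; mobring. Qed.
Lemma mdet1_madj_l : forall g, mdet g = 1 -> mmul (madj g) g = mid.
Proof. intros g H; rewrite mmul_madj_l, H; reflexivity. Qed.
Lemma mdet1_madj_r : forall g, mdet g = 1 -> mmul g (madj g) = mid.
Proof. intros g H; rewrite mmul_madj_r, H; reflexivity. Qed.

Lemma peq_refl : forall g, peq g g.
Proof. left; reflexivity. Qed.
Lemma peq_sym : forall g h, peq g h -> peq h g.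
Proof. intros g h [H|H]; subst; [left|right]; auto. rewrite mneg_mneg; auto. Qed.
Lemma peq_trans : forall g h k, peq g h -> peq h k -> peq g k.
Proof. intros g h k [H1|H1] [H2|H2]; subst; unfold peq; rewrite ?mneg_mneg; auto. Qed.
Lemma peq_mneg : forall g, peq (mneg g) g.
Proof. right; reflexivity. Qed.
Lemma peq_mneg_r : forall g h, peq g h -> peq g (mneg h).
Proof. intros g h H; eapply peq_trans; [exact H| apply peq_sym, peq_mneg]. Qed.
Lemma peq_mmul : forall g g' h h', peq g g' -> peq h h' -> peq (mmul g h) (mmul g' h').
Proof. intros g g' h h' [H1|H1] [H2|H2]; subst; unfold peq;
  rewrite ?mmul_mneg_l, ?mmul_mneg_r, ?mneg_mneg; auto. Qed.
Lemma peq_mdet : forall g h, peq g h -> mdet g = mdet h.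
Proof. intros g h [H|H]; subst; rewrite ?mdet_mneg; auto. Qed.
Lemma peq_madj : forall g h, peq g h -> peq (madj g) (madj h).
Proof. intros g h [H|H]; subst; [left|right]; rewrite ?madj_mneg; auto. Qed.

Definition boh (p q : R) : bpt := if Req_EM_T q 0 then Inf else Fin (p / q).
Definition homp (e : bpt) : R * R := match e with Fin x => (x, 1) | Inf => (1, 0) end.
Definition acth (g : mob) (P : R * R) : R * R :=
  (ma g * fst P + mb g * snd P, mc g * fst P + md g * snd P).

Lemma boh_ext : forall p q p' q', p = p' -> q = q' -> boh p q = boh p' q'.
Proof. intros; subst; auto. Qed.

Lemma act_bpt_boh : forall g e, act_bpt g e = boh (fst (acth g (homp e))) (snd (acth g (homp e))).
Proof.
  intros g [x|]; simpl.
  - change (act_bpt g (Fin x)) with (boh (ma g * x + mb g) (mc g * x + md g)).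
    apply boh_ext; ring.
  - change (act_bpt g Inf) with (boh (ma g) (mc g)). apply boh_ext; ring.
Qed.

Lemma boh_scale : forall l p q, l <> 0 -> boh (l * p) (l * q) = boh p q.
Proof.
  intros l p q Hl; unfold boh.
  destruct (Req_EM_T (l*q) 0) as [H|H]; destruct (Req_EM_T q 0) as [H'|H']; auto.
  - exfalso; apply H'. destruct (Rmult_integral _ _ H); auto; contradiction.
  - exfalso; apply H; subst; ring.
  - f_equal; field; auto.
Qed.

Lemma homp_boh : forall p q, ~ (p = 0 /\ q = 0) -> exists l, l <> 0 /\
   homp (boh p q) = (l * p, l * q).
Proof.
  intros p q Hpq; unfold boh.
  destruct (Req_EM_T q 0) as [H|H]; simpl.
  - subst. assert (p <> 0) by tauto. exists (/p); split.
    + apply Rinv_neq_0_compat; auto.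
    + f_equal; field; auto.
  - exists (/q); split; [apply Rinv_neq_0_compat; auto|]. f_equal; field; auto.
Qed.

Lemma boh_homp : forall e, boh (fst (homp e)) (snd (homp e)) = e.
Proof.
  intros [x|]; unfold boh; simpl.
  - destruct (Req_EM_T 1 0); [lra|]. f_equal; field.
  - destruct (Req_EM_T 0 0); [auto|lra].
Qed.

Lemma homp_nz : forall e, ~ (fst (homp e) = 0 /\ snd (homp e) = 0).
Proof. intros [x|]; simpl; lra. Qed.

Lemma acth_nz : forall g P, mdet g <> 0 -> ~ (fst P = 0 /\ snd P = 0) ->
  ~ (fst (acth g P) = 0 /\ snd (acth g P) = 0).
Proof.
  intros [a b c d] [p q] Hd HP [H1 H2]; unfold acth, mdet in *; simpl in *.
  apply HP. split.
  - assert (p * (a*d - b*c) = 0) by (replace (p*(a*d-b*c)) with (d*(a*p+b*q) - b*(c*p+d*q)) by ring; rewrite H1, H2; ring).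
    destruct (Rmult_integral _ _ H); auto; contradiction.
  - assert (q * (a*d - b*c) = 0) by (replace (q*(a*d-b*c)) with (a*(c*p+d*q) - c*(a*p+b*q)) by ring; rewrite H1, H2; ring).
    destruct (Rmult_integral _ _ H); auto; contradiction.
Qed.

Lemma act_bpt_mmul : forall g h e, mdet g <> 0 -> mdet h <> 0 ->
  act_bpt (mmul g h) e = act_bpt g (act_bpt h e).
Proof.
  intros g h e Hg Hh.
  rewrite (act_bpt_boh g (act_bpt h e)), (act_bpt_boh h e), act_bpt_boh.
  destruct (homp_boh (fst (acth h (homp e))) (snd (acth h (homp e)))) as [l [Hl E]].
  { apply acth_nz; auto; apply homp_nz. }
  rewrite E. destruct (homp e) as [p q]. destruct g as [a b c d]; destruct h as [a' b' c' d'].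
  unfold acth; simpl.
  rewrite <- (boh_scale l); auto. apply boh_ext; ring.
Qed.

Lemma act_bpt_scalar : forall D e, D <> 0 -> act_bpt (mkMob D 0 0 D) e = e.
Proof.
  intros D e HD. rewrite act_bpt_boh. rewrite <- (boh_homp e) at 3.
  destruct (homp e) as [p q]; unfold acth; simpl.
  rewrite <- (boh_scale D p q HD). apply boh_ext; ring.
Qed.

Lemma act_bpt_mneg : forall g e, act_bpt (mneg g) e = act_bpt g e.
Proof.
  intros g e. rewrite !act_bpt_boh. destruct (homp e) as [p q]; destruct g; unfold acth; simpl.
  rewrite <- (boh_scale (-1)) by lra. apply boh_ext; ring.
Qed.

Lemma act_bpt_mid : forall e, act_bpt mid e = e.
Proof. intros; apply act_bpt_scalar; lra. Qed.

Lemma act_geod_mmul : forall g h l, mdet g <> 0 -> mdet h <> 0 ->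
  act_geod (mmul g h) l = act_geod g (act_geod h l).
Proof. intros; unfold act_geod; simpl; rewrite !act_bpt_mmul; auto. Qed.
Lemma act_geod_mneg : forall g l, act_geod (mneg g) l = act_geod g l.
Proof. intros; unfold act_geod; rewrite !act_bpt_mneg; auto. Qed.
Lemma act_geod_mid : forall l, act_geod mid l = l.
Proof. intros [] ; unfold act_geod; simpl; rewrite !act_bpt_mid; auto. Qed.
Lemma act_geod_peq : forall g h l, peq g h -> act_geod g l = act_geod h l.
Proof. intros g h l [H|H]; subst; auto using act_geod_mneg. Qed.
Lemma act_geod_grev : forall g l, act_geod g (grev l) = grev (act_geod g l).
Proof. intros g []; reflexivity. Qed.


Definition den (g : mob) (z : pt) := (mc g * px z + md g) ^ 2 + (mc g * py z) ^ 2.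

Lemma sq_pos : forall r, r <> 0 -> 0 < r * r.
Proof. intros r H. destruct (Rlt_or_le r 0) as [H0|H0]; [nra|]. destruct H0 as [H0|H0]; [nra|]. subst; lra. Qed.

Lemma sumsq0 : forall a b, a^2 + b^2 = 0 -> a = 0 /\ b = 0.
Proof.
  intros a b H. assert (0 <= a^2) by apply pow2_ge_0. assert (0 <= b^2) by apply pow2_ge_0.
  split; apply Rsqr_0_uniq; unfold Rsqr; [replace (a*a) with (a^2) by ring|replace (b*b) with (b^2) by ring]; lra.
Qed.

Lemma den_pos : forall g z, mdet g <> 0 -> 0 < py z -> 0 < den g z.
Proof.
  intros [a b c d] [x y] Hd Hy; unfold den, mdet in *; simpl in *.
  destruct (Req_dec c 0) as [Hc|Hc].
  - subst. assert (d <> 0) by (intro; subst; apply Hd; ring).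
    assert (0 < d*d) by (apply sq_pos; auto).
    assert (0 <= (0*x+d)^2) by apply pow2_ge_0. replace ((0*y)^2) with 0 by ring.
    replace ((0*x+d)^2) with (d*d) by ring. lra.
  - assert (0 < (c*y)*(c*y)) by (apply sq_pos; apply Rmult_integral_contrapositive; split; [exact Hc| intro; lra]).
    assert (0 <= (c*x+d)^2) by apply pow2_ge_0. replace ((c*y)^2) with ((c*y)*(c*y)) by ring. lra.
Qed.

Lemma act_pt_py : forall g z, py (act_pt g z) = mdet g * py z / den g z.
Proof. reflexivity. Qed.

Lemma act_pt_py_pos : forall g z, 0 < mdet g -> 0 < py z -> 0 < py (act_pt g z).
Proof.
  intros g z Hd Hy. rewrite act_pt_py. assert (0 < den g z) by (apply den_pos; lra).
  apply Rdiv_lt_0_compat; nra.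
Qed.

Lemma act_pt_mmul : forall g h z, mdet g <> 0 -> mdet h <> 0 -> 0 < py z ->
  act_pt (mmul g h) z = act_pt g (act_pt h z).
Proof.
  intros g h z Hg Hh Hz.
  assert (D1 : 0 < den h z) by (apply den_pos; auto).
  assert (Hhz : py (act_pt h z) <> 0).
  { rewrite act_pt_py. unfold Rdiv. apply Rmult_integral_contrapositive; split.
    - apply Rmult_integral_contrapositive; split; lra.
    - apply Rinv_neq_0_compat; lra. }
  assert (D2 : den g (act_pt h z) <> 0).
  { destruct g as [a b c d]; unfold den; simpl.
    intro E. destruct (sumsq0 _ _ E) as [E1 E2].
    destruct (Rmult_integral _ _ E2) as [H|H]; [|contradiction].
    subst. apply Hg. unfold mdet; simpl. assert (d = 0) by lra. subst; ring. }
  assert (D3 : 0 < den (mmul g h) z) by (apply den_pos; auto; rewrite mdet_mmul; apply Rmult_integral_contrapositive; auto).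
  revert D1 D2 D3 Hhz. destruct g as [a b c d], h as [a' b' c' d'], z as [x y].
  unfold den, act_pt, mmul, mdet; simpl. intros D1 D2 D3 Hhz.
  apply pt_eq; field; repeat split; auto; try lra.
  all: match goal with D1 : 0 < ?K, D2 : ?Y <> 0 |- ?X <> 0 =>
     assert (EE : X = Y * (K * K)) by (field; lra); rewrite EE;
     apply Rmult_integral_contrapositive; split; [exact D2| apply Rmult_integral_contrapositive; split; lra] end.
Qed.


Definition Sf (P1 P2 : R * R) (z : pt) : R :=
  (fst P2 * snd P1 - fst P1 * snd P2) *
  ((px z * snd P1 - fst P1) * (px z * snd P2 - fst P2) + py z ^ 2 * snd P1 * snd P2).

Lemma sidef_S : forall l z, sidef l z = Sf (homp (gtail l)) (homp (ghead l)) z.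
Proof.
  intros [[u|] [v|]] z; unfold sidef, Sf; simpl; ring.
Qed.

Lemma Sf_scale : forall l1 l2 p1 q1 p2 q2 z,
  Sf (l1 * p1, l1 * q1) (l2 * p2, l2 * q2) z = (l1 * l1) * (l2 * l2) * Sf (p1, q1) (p2, q2) z.
Proof. intros; unfold Sf; simpl; ring. Qed.

Lemma Sf_act : forall g P1 P2 z, mdet g <> 0 -> 0 < py z ->
  Sf (acth g P1) (acth g P2) (act_pt g z) = mdet g ^ 3 / den g z * Sf P1 P2 z.
Proof.
  intros g P1 P2 z Hg Hz. assert (D := den_pos g z Hg Hz).
  revert D. destruct g as [a b c d], P1 as [p1 q1], P2 as [p2 q2], z as [x y].
  unfold Sf, acth, act_pt, den, mdet; simpl. intros D. field. lra.
Qed.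

Lemma sidef_act : forall g l z, 0 < mdet g -> 0 < py z ->
  exists K, 0 < K /\ sidef (act_geod g l) (act_pt g z) = K * sidef l z.
Proof.
  intros g l z Hg Hz.
  rewrite !sidef_S. destruct l as [T H]; simpl.
  rewrite !act_bpt_boh.
  destruct (homp_boh (fst (acth g (homp T))) (snd (acth g (homp T)))) as [l1 [Hl1 E1]].
  { apply acth_nz; [lra|apply homp_nz]. }
  destruct (homp_boh (fst (acth g (homp H))) (snd (acth g (homp H)))) as [l2 [Hl2 E2]].
  { apply acth_nz; [lra|apply homp_nz]. }
  rewrite E1, E2, Sf_scale.
  replace (fst (acth g (homp T)), snd (acth g (homp T))) with (acth g (homp T)) by (destruct (acth g (homp T)); auto).
  replace (fst (acth g (homp H)), snd (acth g (homp H))) with (acth g (homp H)) by (destruct (acth g (homp H)); auto).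
  rewrite Sf_act by lra.
  exists (l1 * l1 * (l2 * l2) * (mdet g ^ 3 / den g z)). split; [|ring].
  assert (0 < l1 * l1) by (apply sq_pos; auto).
  assert (0 < l2 * l2) by (apply sq_pos; auto).
  assert (0 < den g z) by (apply den_pos; lra).
  assert (0 < mdet g ^ 3) by (apply pow_lt; lra).
  apply Rmult_lt_0_compat; [apply Rmult_lt_0_compat; auto|].
  apply Rdiv_lt_0_compat; auto.
Qed.


Lemma sidef_grev : forall l z, sidef (grev l) z = - sidef l z.
Proof. intros l z; rewrite !sidef_S; destruct l as [T H]; simpl; unfold Sf; ring. Qed.

Lemma act_pt_scalar : forall D z, D <> 0 -> act_pt (mkMob D 0 0 D) z = z.
Proof.
  intros D [x y] HD; unfold act_pt, mdet; simpl. apply pt_eq; field; auto.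
Qed.

Lemma act_pt_mneg : forall g z, act_pt (mneg g) z = act_pt g z.
Proof.
  intros [a b c d] [x y]; unfold act_pt, mneg, mdet; simpl.
  apply pt_eq; unfold Rdiv; f_equal; try ring; f_equal; ring.
Qed.

Lemma act_pt_peq : forall g h z, peq g h -> act_pt g z = act_pt h z.
Proof. intros g h z [H|H]; subst; auto using act_pt_mneg. Qed.

Lemma act_pt_mid : forall z, act_pt mid z = z.
Proof. intros; apply act_pt_scalar; lra. Qed.

Lemma act_pt_madj_r : forall g z, 0 < mdet g -> 0 < py z -> act_pt g (act_pt (madj g) z) = z.
Proof.
  intros g z Hg Hz. rewrite <- act_pt_mmul; auto; try (rewrite ?mdet_madj; lra).
  rewrite mmul_madj_r. apply act_pt_scalar; lra.
Qed.

Lemma act_pt_madj_l : forall g z, 0 < mdet g -> 0 < py z -> act_pt (madj g) (act_pt g z) = z.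
Proof.
  intros g z Hg Hz. rewrite <- act_pt_mmul; auto; try (rewrite ?mdet_madj; lra).
  rewrite mmul_madj_l. apply act_pt_scalar; lra.
Qed.

Lemma act_geod_madj_r : forall g l, mdet g <> 0 -> act_geod g (act_geod (madj g) l) = l.
Proof.
  intros g l Hg. rewrite <- act_geod_mmul; auto; try (rewrite ?mdet_madj; auto).
  rewrite mmul_madj_r. destruct l; unfold act_geod; simpl; rewrite !act_bpt_scalar; auto.
Qed.

Lemma act_geod_madj_l : forall g l, mdet g <> 0 -> act_geod (madj g) (act_geod g l) = l.
Proof.
  intros g l Hg. rewrite <- act_geod_mmul; auto; try (rewrite ?mdet_madj; auto).
  rewrite mmul_madj_l. destruct l; unfold act_geod; simpl; rewrite !act_bpt_scalar; auto.
Qed.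

Lemma on_act : forall g l z, 0 < mdet g -> 0 < py z ->
  (on_geod (act_geod g l) (act_pt g z) <-> on_geod l z).
Proof.
  intros g l z Hg Hz; destruct (sidef_act g l z Hg Hz) as [K [HK E]].
  unfold on_geod; rewrite E; split; intro H; [|rewrite H; ring].
  destruct (Rmult_integral _ _ H); auto; lra.
Qed.

Lemma left_act : forall g l z, 0 < mdet g -> 0 < py z ->
  (left_of (act_geod g l) (act_pt g z) <-> left_of l z).
Proof.
  intros g l z Hg Hz; destruct (sidef_act g l z Hg Hz) as [K [HK E]].
  unfold left_of; rewrite E; split; intro H.
  - destruct (Rlt_or_le 0 (sidef l z)); auto. nra.
  - nra.
Qed.

Lemma right_act : forall g l z, 0 < mdet g -> 0 < py z ->
  (right_of (act_geod g l) (act_pt g z) <-> right_of l z).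
Proof.
  intros g l z Hg Hz; destruct (sidef_act g l z Hg Hz) as [K [HK E]].
  unfold right_of; rewrite E; split; intro H.
  - destruct (Rlt_or_le (sidef l z) 0); auto. nra.
  - nra.
Qed.

Lemma le0_act : forall g l z, 0 < mdet g -> 0 < py z ->
  (sidef (act_geod g l) (act_pt g z) <= 0 <-> sidef l z <= 0).
Proof.
  intros g l z Hg Hz; destruct (sidef_act g l z Hg Hz) as [K [HK E]].
  rewrite E; split; intro H.
  - destruct (Rle_or_lt (sidef l z) 0); auto. nra.
  - nra.
Qed.

Lemma ge0_act : forall g l z, 0 < mdet g -> 0 < py z ->
  (0 <= sidef (act_geod g l) (act_pt g z) <-> 0 <= sidef l z).
Proof.
  intros g l z Hg Hz; destruct (sidef_act g l z Hg Hz) as [K [HK E]].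
  rewrite E; split; intro H.
  - destruct (Rle_or_lt 0 (sidef l z)); auto. nra.
  - nra.
Qed.

Lemma cpt_py : forall M s, 0 < mdet M -> 0 < py (cpt M s).
Proof. intros; unfold cpt; apply act_pt_py_pos; simpl; auto; apply exp_pos. Qed.

Lemma exp2 : forall s, exp s ^ 2 = exp (2 * s).
Proof. intros; replace (2*s) with (s+s) by ring; rewrite exp_plus; ring. Qed.

Lemma curve_form : forall N m, 0 < mdet N -> exists A B C, forall s, exists K, 0 < K /\
  sidef m (cpt N s) = K * (A * (B + C * exp (2 * s))).
Proof.
  intros N m HN.
  set (m' := act_geod (madj N) m).
  assert (Em : m = act_geod N m') by (unfold m'; rewrite act_geod_madj_r; auto; lra).
  destruct (homp (gtail m')) as [p1 q1] eqn:E1.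
  destruct (homp (ghead m')) as [p2 q2] eqn:E2.
  exists (p2 * q1 - p1 * q2), (p1 * p2), (q1 * q2). intro s.
  unfold cpt. rewrite Em.
  destruct (sidef_act N m' (mkPt 0 (exp s)) HN) as [K [HK E]]; [simpl; apply exp_pos|].
  exists K; split; auto. rewrite E. f_equal. rewrite sidef_S, E1, E2. unfold Sf; simpl.
  rewrite <- exp2. ring.
Qed.

Lemma ivt_curve : forall N m a b, 0 < mdet N -> a < b ->
  0 < sidef m (cpt N a) -> sidef m (cpt N b) < 0 ->
  exists s, a < s < b /\ sidef m (cpt N s) = 0.
Proof.
  intros N m a b HN Hab Ha Hb.
  destruct (curve_form N m HN) as [A [B [C HF]]].
  destruct (HF a) as [Ka [HKa Ea]]. destruct (HF b) as [Kb [HKb Eb]].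
  rewrite Ea in Ha. rewrite Eb in Hb.
  set (Ea' := exp (2*a)) in *. set (Eb' := exp (2*b)) in *.
  assert (Hlt : Ea' < Eb') by (apply exp_increasing; lra).
  assert (Hpa : 0 < Ea') by apply exp_pos.
  assert (ga : 0 < A * (B + C * Ea')).
  { destruct (Rlt_or_le 0 (A * (B + C * Ea'))); auto. nra. }
  assert (gb : A * (B + C * Eb') < 0).
  { destruct (Rlt_or_le (A * (B + C * Eb')) 0); auto. nra. }
  assert (HC : C <> 0). { intro; subst. nra. }
  set (Es := - B / C).
  assert (Ha2 : A * C * (Ea' - Es) > 0) by (unfold Es; replace (A * C * (Ea' - - B / C)) with (A * (B + C * Ea')) by (field; auto); lra).
  assert (Hb2 : A * C * (Eb' - Es) < 0) by (unfold Es; replace (A * C * (Eb' - - B / C)) with (A * (B + C * Eb')) by (field; auto); lra).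
  assert (HEs : Ea' < Es < Eb').
  { destruct (Rlt_or_le 0 (A*C)) as [P|P].
    - split; [destruct (Rlt_or_le Ea' Es); auto; nra| destruct (Rlt_or_le Es Eb'); auto; nra].
    - split; [destruct (Rlt_or_le Ea' Es); auto; nra| destruct (Rlt_or_le Es Eb'); auto; nra]. }
  assert (HEp : 0 < Es) by lra.
  exists (ln Es / 2). 
  assert (Hx : exp (2 * (ln Es / 2)) = Es) by (replace (2 * (ln Es / 2)) with (ln Es) by field; apply exp_ln; auto).
  split.
  - split.
    + assert (2 * a < 2 * (ln Es / 2)); [|lra]. apply exp_lt_inv. rewrite Hx; unfold Ea' in HEs; lra.
    + assert (2 * (ln Es / 2) < 2 * b); [|lra]. apply exp_lt_inv. rewrite Hx; unfold Eb' in HEs; lra.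
  - destruct (HF (ln Es / 2)) as [K [HK E]]. rewrite E, Hx. unfold Es. field_simplify; auto.
    all: try (replace (A * (B + C * (- B / C))) with 0 by (field; auto); ring).
Qed.

Lemma ivt_curve' : forall N m a b, 0 < mdet N -> a < b ->
  sidef m (cpt N a) < 0 -> 0 < sidef m (cpt N b) ->
  exists s, a < s < b /\ sidef m (cpt N s) = 0.
Proof.
  intros N m a b HN Hab Ha Hb.
  destruct (ivt_curve N (grev m) a b HN Hab) as [s [Hs E]]; rewrite ?sidef_grev; try lra.
  exists s; split; auto. rewrite sidef_grev in E; lra.
Qed.

Lemma twozero : forall N m s1 s2, 0 < mdet N -> s1 <> s2 ->
  sidef m (cpt N s1) = 0 -> sidef m (cpt N s2) = 0 -> forall s, sidef m (cpt N s) = 0.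
Proof.
  intros N m s1 s2 HN Hne H1 H2 s.
  destruct (curve_form N m HN) as [A [B [C HF]]].
  destruct (HF s1) as [K1 [HK1 E1]]. destruct (HF s2) as [K2 [HK2 E2]].
  destruct (HF s) as [K [HK E]]. rewrite E.
  rewrite E1 in H1; rewrite E2 in H2.
  assert (G1 : A * (B + C * exp (2*s1)) = 0) by (destruct (Rmult_integral _ _ H1); auto; lra).
  assert (G2 : A * (B + C * exp (2*s2)) = 0) by (destruct (Rmult_integral _ _ H2); auto; lra).
  assert (Hx : exp (2*s1) <> exp (2*s2)) by (intro X; apply exp_inv in X; lra).
  destruct (Req_dec A 0) as [HA|HA]; [subst; ring|].
  assert (B + C * exp (2*s1) = 0) by (destruct (Rmult_integral _ _ G1); auto; contradiction).
  assert (B + C * exp (2*s2) = 0) by (destruct (Rmult_integral _ _ G2); auto; contradiction).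
  assert (C * (exp (2*s1) - exp (2*s2)) = 0) by lra.
  assert (C = 0) by (destruct (Rmult_integral _ _ H3); auto; exfalso; apply Hx; lra).
  subst. assert (B = 0) by lra. subst. ring.
Qed.


Definition Good (Rs : mob) : Prop :=
  mdet Rs = 1 /\ (ma Rs + md Rs) ^ 2 = 1 /\
  (exists u v, 0 < u < v /\ act_geod Rs e0 = mkGeod (Fin u) (Fin v)) /\
  (exists u v, 0 < u < v /\ act_geod (mmul Rs Rs) e0 = mkGeod (Fin u) (Fin v)) /\
  (exists p, 0 < py p /\ 0 < px p /\ act_pt Rs p = p).

Lemma cos_val : cos (- (2 * PI / 3)) = - (1/2).
Proof. rewrite cos_neg. replace (2 * PI / 3) with (PI - PI/3) by field.
  rewrite Rtrigo_facts.cos_pi_minus, cos_PI3. ring. Qed.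
Lemma sin_val : sin (- (2 * PI / 3)) = - (sqrt 3 / 2).
Proof. rewrite sin_neg. replace (2 * PI / 3) with (PI - PI/3) by field.
  rewrite sin_PI_x, sin_PI3. ring. Qed.

Definition R0 (x y : R) : mob :=
  let k := sqrt 3 / (2 * y) in mkMob (1/2 + k * x) (- k) k (1/2 - k * x).

Lemma s3sq : sqrt 3 * sqrt 3 = 3.
Proof. apply sqrt_sqrt; lra. Qed.

Lemma rot_peq : forall a b c d x y,
  is_rotation (mkMob a b c d) (mkPt x y) (- (2 * PI / 3)) ->
  x ^ 2 + y ^ 2 = 1 -> peq (mkMob a b c d) (R0 x y).
Proof.
  intros a b c d x y [Hdet [Hy [Hfix [T1 T2]]]] Hr.
  cbv zeta beta in *. cbn [ma mb mc md px py] in *. rewrite cos_val, sin_val in *.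
  set (s3 := sqrt 3) in *. assert (Hs3 : s3 * s3 = 3) by apply s3sq.
  assert (Hs3p : 0 < s3) by apply Rlt_sqrt3_0.
  unfold mdet in Hdet; cbn [ma mb mc md] in Hdet.
  remember (c * x + d) as u eqn:Eu. remember (c * y) as v eqn:Ev.
  remember (u^2 - v^2) as A eqn:EA. remember (2 * u * v) as B eqn:EB.
  assert (HB : B = - (s3 * A)) by lra.
  assert (HA : A = - (1/2)) by (subst B; nra).
  assert (HB' : B = s3 / 2) by (rewrite HB, HA; field).
  clear T1 T2.
  assert (F1 : px (act_pt (mkMob a b c d) (mkPt x y)) = x) by (rewrite Hfix; reflexivity).
  assert (F2 : py (act_pt (mkMob a b c d) (mkPt x y)) = y) by (rewrite Hfix; reflexivity).
  unfold act_pt, mdet in F1, F2; cbn [px py ma mb mc md] in F1, F2. clear Hfix.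
  assert (Hden : 0 < (c * x + d) ^ 2 + (c * y) ^ 2).
  { apply (den_pos (mkMob a b c d) (mkPt x y)); [unfold mdet; simpl; rewrite Hdet; intro; lra | simpl; lra]. }
  rewrite <- Eu, <- Ev in F1, F2, Hden.
  assert (Hden1 : u ^ 2 + v ^ 2 = 1).
  { rewrite Hdet in F2.
    apply (f_equal (fun t => t * (u ^ 2 + v ^ 2))) in F2.
    replace (1 * y / (u ^ 2 + v ^ 2) * (u ^ 2 + v ^ 2)) with (y * 1) in F2 by (field; lra).
    apply Rmult_eq_reg_l in F2; lra. }
  rewrite Hden1 in F1.
  assert (Ha : a = u + c * x).
  { assert (E : a * (d * u + c * x * u + c * c * y * y) = u * (a * d - b * c) + c * ((a * x + b) * (c * x + d) + a * c * y ^ 2)) by (subst u; ring).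
    replace (d * u + c * x * u + c * c * y * y) with (u^2 + v^2) in E by (subst u v; ring).
    rewrite Hden1, Hdet in E. replace ((a * x + b) * (c * x + d) + a * c * y ^ 2) with x in E by (rewrite <- F1 at 1; rewrite Eu; field).
    lra. }
  assert (Hb : b = - c).
  { assert (E : b * (u^2 + v^2) = - (x * u + c * y ^ 2) * (a * d - b * c) + d * ((a * x + b) * (c * x + d) + a * c * y ^ 2)) by (subst u v; ring).
    rewrite Hden1, Hdet in E. replace ((a * x + b) * (c * x + d) + a * c * y ^ 2) with x in E by (rewrite <- F1 at 1; rewrite Eu; field).
    replace d with (u - c * x) in E by (subst u; ring).
    replace (-(x*u + c*y^2)*1 + (u - c*x)*x) with (- c * (x^2 + y^2)) in E by ring.
    rewrite Hr in E. lra. }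
  assert (Hu : u = 1/2 \/ u = - (1/2)).
  { assert ((u - 1/2) * (u + 1/2) = 0) by (replace ((u-1/2)*(u+1/2)) with ((u^2 - v^2 + (u^2 + v^2))/2 - 1/4) by field; rewrite Hden1, <- EA, HA; field).
    destruct (Rmult_integral _ _ H); [left|right]; lra. }
  assert (Hc : c = 2 * u * (s3 / (2 * y))).
  { assert (Hv : 2 * u * v = s3 / 2) by (rewrite <- EB; exact HB').
    assert (u * u = 1/4) by (destruct Hu as [->| ->]; field).
    rewrite Ev in Hv. apply (Rmult_eq_reg_l y); [|lra].
    replace (y * c) with (2 * u * (2 * u * (c * y))) by (replace (2*u*(2*u*(c*y))) with (4 * (u*u) * (c*y)) by ring; rewrite H; field).
    replace (2 * u * (c * y)) with (s3 / 2) by (rewrite <- Hv; field). field; lra. }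
  unfold R0. destruct Hu as [Hu|Hu]; rewrite Hu in Hc.
  - left. apply mob_eq.
    + rewrite Ha, Hu, Hc; unfold s3; field; lra.
    + rewrite Hb, Hc; unfold s3; field; lra.
    + rewrite Hc; unfold s3; field; lra.
    + replace d with (u - c * x) by (subst u; field). rewrite Hu, Hc; unfold s3; field; lra.
  - right. unfold mneg; simpl. apply mob_eq.
    + rewrite Ha, Hu, Hc; unfold s3; field; lra.
    + rewrite Hb, Hc; unfold s3; field; lra.
    + rewrite Hc; unfold s3; field; lra.
    + replace d with (u - c * x) by (subst u; field). rewrite Hu, Hc; unfold s3; field; lra.
Qed.

Lemma hcosh_r : forall x y, 0 < y ->
  (forall q, 0 < py q -> on_geod e0 q -> hcosh (mkPt x y) pI <= hcosh (mkPt x y) q) ->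
  x ^ 2 + y ^ 2 = 1.
Proof.
  intros x y Hy H.
  set (r := x^2 + y^2).
  assert (Hr0 : 0 <= r) by (unfold r; assert (0 <= x^2) by apply pow2_ge_0; assert (0 <= y^2) by apply pow2_ge_0; lra).
  set (Y := (1 + r) / 2).
  assert (HY : 0 < Y) by (unfold Y; lra).
  specialize (H (mkPt 0 Y) HY). unfold on_geod, sidef, e0 in H; simpl in H.
  specialize (H ltac:(ring)). unfold hcosh in H; simpl in H.
  assert (H1 : (x^2 + (y-1)^2) / (2*y*1) <= ((x-0)^2 + (y - Y)^2)/(2*y*Y)).
  { replace ((x-0)^2) with (x^2) in H by ring. replace (x - 0) with x in H by ring. lra. }
  apply (Rmult_le_compat_l (2*y*Y)) in H1; [|nra].
  replace (2*y*Y*((x^2 + (y-1)^2) / (2*y*1))) with (Y * (x^2 + (y-1)^2)) in H1 by (field; lra).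
  replace (2*y*Y*(((x-0)^2 + (y - Y)^2)/(2*y*Y))) with ((x-0)^2 + (y - Y)^2) in H1 by (field; lra).
  assert (H2 : (r - 1)^2 <= 0) by (unfold Y, r in *; lra).
  assert (H3 : 0 <= (r-1)^2) by apply pow2_ge_0.
  assert (H4 : (r-1) * (r-1) = 0) by lra.
  destruct (Rmult_integral _ _ H4); unfold r in *; lra.
Qed.

Lemma frac_lt : forall a b c d, 0 < b -> 0 < d -> a * d < c * b -> a / b < c / d.
Proof.
  intros a b c d Hb Hd H.
  replace (a / b) with (a * d * / (b * d)) by (field; lra).
  replace (c / d) with (c * b * / (b * d)) by (field; lra).
  apply Rmult_lt_compat_r; auto. apply Rinv_0_lt_compat; nra.
Qed.

Ltac dec_if := match goal with |- context [Req_dec_T ?a ?b] => destruct (Req_dec_T a b) as [?E|?E] end.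

Lemma R0_geods : forall x y, 0 < x -> 0 < y -> x ^ 2 + y ^ 2 = 1 -> y < sqrt 3 * x ->
  act_geod (R0 x y) e0 = mkGeod (Fin ((y + sqrt 3 * x) / sqrt 3)) (Fin (sqrt 3 / (sqrt 3 * x - y))) /\
  act_geod (mmul (R0 x y) (R0 x y)) e0 = mkGeod (Fin ((sqrt 3 * x - y) / sqrt 3)) (Fin (sqrt 3 / (sqrt 3 * x + y))).
Proof.
  intros x y Hx Hy Hr Hyx.
  assert (Hs3 : sqrt 3 * sqrt 3 = 3) by apply s3sq.
  assert (Hs3p : 0 < sqrt 3) by apply Rlt_sqrt3_0.
  assert (Hyy : y * y = 1 - x * x) by (replace (y*y) with (y^2) by ring; replace (x*x) with (x^2) by ring; lra).
  unfold R0, act_geod, e0, act_bpt, mmul; cbn [ma mb mc md gtail ghead].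
  set (k := sqrt 3 / (2 * y)).
  assert (Hk : 0 < k) by (unfold k; apply Rdiv_lt_0_compat; lra).
  assert (Hkx : 0 < k * x) by nra.
  assert (Hky : k * k * (y * y) = 3 / 4) by (unfold k; replace (sqrt 3 / (2 * y) * (sqrt 3 / (2 * y)) * (y * y)) with ((sqrt 3 * sqrt 3) / 4) by (field; lra); rewrite Hs3; field).
  assert (Hd0 : k * 0 + (1 / 2 - k * x) = (y - sqrt 3 * x) / (2 * y)) by (unfold k; field; lra).
  split; f_equal.
  - dec_if; [lra|]. f_equal. unfold k; field. split; lra.
  - dec_if.
    + exfalso. rewrite Hd0 in E.
      assert (0 < / (2 * y)) by (apply Rinv_0_lt_compat; lra).
      assert ((y - sqrt 3 * x) / (2 * y) < 0) by (unfold Rdiv; nra).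
      lra.
    + f_equal. rewrite Hd0. unfold k; field. repeat split; lra.
  - replace (k * (1 / 2 + k * x) + (1 / 2 - k * x) * k) with k by field.
    dec_if; [lra|]. f_equal.
    replace ((1 / 2 + k * x) * (1 / 2 + k * x) + - k * k) with (1/4 + k * x - k * k * (y * y)) by (rewrite Hyy; field).
    rewrite Hky. unfold k; field. split; lra.
  - replace (k * (1 / 2 + k * x) + (1 / 2 - k * x) * k) with k by field.
    replace (k * 0 + (k * - k + (1 / 2 - k * x) * (1 / 2 - k * x))) with (1/4 - k * x - k * k * (y * y)) by (rewrite Hyy; field).
    rewrite Hky.
    dec_if; [lra|]. f_equal.
    replace (((1 / 2 + k * x) * (1 / 2 + k * x) + - k * k) * 0 + ((1 / 2 + k * x) * - k + - k * (1 / 2 - k * x))) with (- k) by field.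
    unfold k; field. split; lra.
Qed.

Lemma R0_e0_gen : forall x y, 0 < y -> y <> sqrt 3 * x ->
  act_geod (R0 x y) e0 = mkGeod (Fin ((y + sqrt 3 * x) / sqrt 3)) (Fin (sqrt 3 / (sqrt 3 * x - y))).
Proof.
  intros x y Hy Hne.
  assert (Hs3p : 0 < sqrt 3) by apply Rlt_sqrt3_0.
  unfold R0, act_geod, e0, act_bpt; cbn [ma mb mc md gtail ghead].
  set (k := sqrt 3 / (2 * y)).
  assert (Hk : 0 < k) by (unfold k; apply Rdiv_lt_0_compat; lra).
  assert (Hd0 : k * 0 + (1 / 2 - k * x) = (y - sqrt 3 * x) / (2 * y)) by (unfold k; field; lra).
  f_equal.
  - dec_if; [lra|]. f_equal. unfold k; field. split; lra.
  - dec_if.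
    + exfalso. rewrite Hd0 in E. apply Hne.
      assert (H : y - sqrt 3 * x = (y - sqrt 3 * x) / (2 * y) * (2 * y)) by (field; lra).
      rewrite E in H. lra.
    + f_equal. rewrite Hd0. unfold k; field. repeat split; try lra. all: intro E'; apply Hne; lra.
Qed.

Lemma R0_e0_eq : forall x y, 0 < y -> y = sqrt 3 * x -> ghead (act_geod (R0 x y) e0) = Inf.
Proof.
  intros x y Hy Hne. subst y.
  unfold R0, act_geod, e0, act_bpt; cbn [ma mb mc md gtail ghead].
  assert (Hs : 0 < sqrt 3) by apply Rlt_sqrt3_0. assert (0 < x) by nra.
  dec_if; auto. exfalso. apply E. field. repeat split; lra.
Qed.

Lemma good_of : forall Rs p,
  is_rotation Rs p (- (2 * PI / 3)) ->
  (forall q, 0 < py q -> on_geod e0 q -> hcosh p pI <= hcosh p q) ->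
  (forall s s', In s (sides Rs) -> In s' (sides Rs) -> s <> s' -> closures_disjoint s s') ->
  (forall z, hDelta0 z -> hDelta Rs p z) -> Good Rs.
Proof.
  intros Rs [x y] Hrot Hcosh Hdisj Hcont.
  assert (Hy : 0 < y) by (destruct Hrot as [_ [H _]]; exact H).
  assert (Hr : x ^ 2 + y ^ 2 = 1) by (apply hcosh_r; auto).
  assert (Hx : 0 < x).
  { destruct (Hcont (mkPt (1/2) 1)) as [_ H].
    - unfold hDelta0; simpl; repeat split; lra.
    - specialize (H e0 (or_introl eq_refl)). unfold sidef, e0 in H; simpl in H. nra. }
  assert (Hs3 : sqrt 3 * sqrt 3 = 3) by apply s3sq.
  assert (Hs3p : 0 < sqrt 3) by apply Rlt_sqrt3_0.
  destruct Rs as [a b c d].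
  assert (Hpeq := rot_peq a b c d x y Hrot Hr).
  set (Rs := mkMob a b c d) in *.
  assert (HRe : act_geod Rs e0 = act_geod (R0 x y) e0) by (apply act_geod_peq; auto).
  assert (HRRe : act_geod (mmul Rs Rs) e0 = act_geod (mmul (R0 x y) (R0 x y)) e0)
    by (apply act_geod_peq; apply peq_mmul; auto).
  assert (Hin0 : In e0 (sides Rs)) by (left; reflexivity).
  assert (Hin1 : In (act_geod Rs e0) (sides Rs)) by (right; left; reflexivity).
  assert (Hyx : y < sqrt 3 * x).
  { destruct (Rtotal_order y (sqrt 3 * x)) as [H|[H|H]]; auto; exfalso.
    - assert (Hne : e0 <> act_geod Rs e0).
      { rewrite HRe. intro E. assert (E' := f_equal gtail E).
        unfold R0, act_geod, act_bpt, e0 in E'; cbn [ma mb mc md gtail ghead] in E'.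
        revert E'. dec_if; [|discriminate]. intros _. 
        assert (0 < sqrt 3 / (2 * y)) by (apply Rdiv_lt_0_compat; lra). lra. }
      destruct (Hdisj _ _ Hin0 Hin1 Hne) as [_ [H2 _]]. apply H2.
      rewrite HRe, R0_e0_eq; auto.
    - assert (HRe' := R0_e0_gen x y Hy ltac:(lra)).
      assert (Hne : e0 <> act_geod Rs e0) by (rewrite HRe, HRe'; discriminate).
      destruct (Hdisj _ _ Hin0 Hin1 Hne) as [_ [_ [_ [_ H5]]]]. apply H5.
      set (u1 := (y + sqrt 3 * x) / sqrt 3). set (v1 := sqrt 3 / (sqrt 3 * x - y)).
      assert (Hu1 : 0 < u1) by (unfold u1; apply Rdiv_lt_0_compat; nra).
      assert (Hv1 : v1 < 0).
      { unfold v1. unfold Rdiv. assert (/ (sqrt 3 * x - y) < 0) by (apply Rinv_lt_0_compat; lra). nra. }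
      exists (mkPt 0 (sqrt (- (u1 * v1)))).
      assert (Hsq : sqrt (- (u1 * v1)) * sqrt (- (u1 * v1)) = - (u1 * v1)) by (apply sqrt_sqrt; nra).
      split; [simpl; apply sqrt_lt_R0; nra|]. split.
      + unfold on_geod, sidef, e0; simpl; ring.
      + rewrite HRe, HRe'. unfold on_geod, sidef; cbn [gtail ghead px py]. fold u1 v1.
        rewrite pow2_sqrt by nra. ring. }
  assert (Hyy : 0 < y * y) by nra.
  assert (Hxx : x * x = 1 - y * y) by (replace (y*y) with (y^2) by ring; replace (x*x) with (x^2) by ring; lra).
  destruct (R0_geods x y Hx Hy Hr Hyx) as [G1 G2].
  assert (Htr : (ma Rs + md Rs) ^ 2 = 1).
  { destruct Hpeq as [E|E]; rewrite E; unfold R0, mneg; cbn [ma md]; field; lra. }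
  assert (Hdet1 : mdet Rs = 1) by (destruct Hrot as [H _]; exact H).
  unfold Good. split; [exact Hdet1|]. split; [exact Htr|].
  split; [|split].
  - eexists; eexists; split; [|rewrite HRe; exact G1].
    split; [apply Rdiv_lt_0_compat; nra|]. apply frac_lt; try nra.
  - eexists; eexists; split; [|rewrite HRRe; exact G2].
    split; [apply Rdiv_lt_0_compat; nra|]. apply frac_lt; try nra.
  - exists (mkPt x y). simpl. split; [lra|split; [lra|]]. destruct Hrot as [_ [_ [H _]]]; exact H.
Qed.


Fixpoint Rp (Rs : mob) (n : nat) : mob :=
  match n with O => mid | S n' => mmul Rs (Rp Rs n') end.

Definition nxt (k : nat) : nat := match k with O => 1%nat | S O => 2%nat | _ => O end.

Definition side (Rs : mob) (k : nat) : geod :=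
  match k with O => e0 | S O => act_geod Rs e0 | _ => act_geod (mmul Rs Rs) e0 end.

Definition Tin (Rs : mob) (z : pt) : Prop :=
  0 < py z /\ 0 < sidef e0 z /\ 0 < sidef (side Rs 1) z /\ 0 < sidef (side Rs 2) z.
Definition Tbar (Rs : mob) (z : pt) : Prop :=
  0 < py z /\ 0 <= sidef e0 z /\ 0 <= sidef (side Rs 1) z /\ 0 <= sidef (side Rs 2) z.

Lemma sidef_e0 : forall z, sidef e0 z = px z.
Proof. intros; unfold sidef, e0; simpl; ring. Qed.

Lemma Iinv_det : mdet Iinv = 1.
Proof. unfold mdet, Iinv; simpl; ring. Qed.

Lemma Iinv_e0 : act_geod Iinv e0 = grev e0.
Proof.
  unfold act_geod, Iinv, e0, grev, act_bpt; cbn [ma mb mc md gtail ghead].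
  dec_if; [lra|]. dec_if; [|exfalso; apply E0; ring].
  f_equal. f_equal. field.
Qed.

Lemma Iinv_px : forall z, 0 < py z -> px (act_pt Iinv z) = - px z / (px z ^ 2 + py z ^ 2).
Proof.
  intros [x y] Hy; unfold act_pt, Iinv, mdet; cbn [px py ma mb mc md] in *.
  assert (0 < y ^ 2) by (apply pow_lt; lra). assert (0 <= x ^ 2) by apply pow2_ge_0.
  replace ((1 * x + 0) ^ 2 + (1 * y) ^ 2) with (x ^ 2 + y ^ 2) by ring.
  field. lra.
Qed.

Lemma Iinv_sign : forall z, 0 < py z ->
  exists K, 0 < K /\ sidef e0 (act_pt Iinv z) = - K * sidef e0 z.
Proof.
  intros z Hz. rewrite !sidef_e0, Iinv_px by auto.
  assert (0 < px z ^ 2 + py z ^ 2) by (assert (0 <= px z ^ 2) by apply pow2_ge_0; nra).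
  exists (/ (px z ^ 2 + py z ^ 2)). split; [apply Rinv_0_lt_compat; auto|]. field. lra.
Qed.

Lemma mmul_mid_mid : mmul mid mid = mid.
Proof. apply mmul_mid_l. Qed.

Section Geo.
Variable Rs : mob.
Hypothesis HG : Good Rs.

Lemma detR : mdet Rs = 1.
Proof. destruct HG as [H _]; exact H. Qed.

Lemma detRp : forall n, mdet (Rp Rs n) = 1.
Proof. induction n; simpl. unfold mdet, mid; simpl; ring. rewrite mdet_mmul, detR, IHn; ring. Qed.

Lemma R3 : peq (mmul Rs (mmul Rs Rs)) mid.
Proof.
  destruct HG as [Hd [Ht _]]. destruct Rs as [a b c d]. unfold mdet in Hd; cbn [ma mb mc md] in *.
  assert (Htt : (a + d - 1) * (a + d + 1) = 0) by (replace ((a + d - 1) * (a + d + 1)) with ((a + d) ^ 2 - 1) by ring; lra).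
  unfold peq, mmul, mid, mneg; simpl.
  destruct (Rmult_integral _ _ Htt) as [E|E].
  - right. assert (Ed : d = 1 - a) by lra. subst d.
    assert (Hbc : b * c = a * (1 - a) - 1) by lra.
    apply mob_eq.
    + replace (a * (a * a + b * c) + b * (c * a + (1 - a) * c)) with (a * (a * a) + 2 * a * (b * c) + (1 - a) * (b * c)) by ring. rewrite Hbc. ring.
    + replace (a * (a * b + b * (1 - a)) + b * (c * b + (1 - a) * (1 - a))) with (b * (a * a + a * (1 - a)) + (b * c) * b + b * ((1 - a) * (1 - a))) by ring.
      replace (b * c * b) with ((a * (1 - a) - 1) * b) by (rewrite <- Hbc; ring). ring.
    + replace (c * (a * a + b * c) + (1 - a) * (c * a + (1 - a) * c)) with (c * (a * a) + (b * c) * c + (1 - a) * (c * a + (1 - a) * c)) by ring.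
      rewrite Hbc. ring.
    + replace (c * (a * b + b * (1 - a)) + (1 - a) * (c * b + (1 - a) * (1 - a))) with ((b * c) * (a + (1 - a)) + (1 - a) * ((b * c) + (1 - a) * (1 - a))) by ring.
      rewrite Hbc. ring.
  - left. assert (Ed : d = - 1 - a) by lra. subst d.
    assert (Hbc : b * c = a * (- 1 - a) - 1) by lra.
    apply mob_eq.
    + replace (a * (a * a + b * c) + b * (c * a + (- 1 - a) * c)) with (a * (a * a) + 2 * a * (b * c) + (- 1 - a) * (b * c)) by ring. rewrite Hbc. ring.
    + replace (a * (a * b + b * (- 1 - a)) + b * (c * b + (- 1 - a) * (- 1 - a))) with (b * (a * a + a * (- 1 - a)) + (b * c) * b + b * ((- 1 - a) * (- 1 - a))) by ring.
      replace (b * c * b) with ((a * (- 1 - a) - 1) * b) by (rewrite <- Hbc; ring). ring.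
    + replace (c * (a * a + b * c) + (- 1 - a) * (c * a + (- 1 - a) * c)) with (c * (a * a) + (b * c) * c + (- 1 - a) * (c * a + (- 1 - a) * c)) by ring.
      rewrite Hbc. ring.
    + replace (c * (a * b + b * (- 1 - a)) + (- 1 - a) * (c * b + (- 1 - a) * (- 1 - a))) with ((b * c) * (a + (- 1 - a)) + (- 1 - a) * ((b * c) + (- 1 - a) * (- 1 - a))) by ring.
      rewrite Hbc. ring.
Qed.

Lemma Rp_S_r : forall n, mmul (Rp Rs n) Rs = Rp Rs (S n).
Proof.
  induction n; simpl. rewrite mmul_mid_l, mmul_mid_r; auto.
  rewrite mmul_assoc. simpl in IHn. rewrite IHn. reflexivity.
Qed.

Lemma Rp3 : peq (Rp Rs 3) mid.
Proof. simpl. rewrite mmul_mid_r. apply R3. Qed.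

Lemma madjR : peq (madj Rs) (mmul Rs Rs).
Proof.
  apply peq_trans with (mmul (madj Rs) (mmul Rs (mmul Rs Rs))).
  - rewrite <- (mmul_mid_r (madj Rs)) at 1. apply peq_mmul; [apply peq_refl| apply peq_sym, R3].
  - rewrite <- mmul_assoc, mdet1_madj_l by apply detR. rewrite mmul_mid_l. apply peq_refl.
Qed.

Lemma detR_ne : mdet Rs <> 0.
Proof. rewrite detR; lra. Qed.
Lemma detRp_ne : forall n, mdet (Rp Rs n) <> 0.
Proof. intros; rewrite detRp; lra. Qed.
Lemma detRp_pos : forall n, 0 < mdet (Rp Rs n).
Proof. intros; rewrite detRp; lra. Qed.

Lemma side_rot : forall k, act_geod Rs (side Rs k) = side Rs (nxt k).
Proof.
  intros [|[|k]]; simpl; auto.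
  - rewrite act_geod_mmul; auto using detR_ne.
  - rewrite <- act_geod_mmul by (rewrite ?mdet_mmul, ?detR; lra).
    rewrite (act_geod_peq _ _ _ R3). apply act_geod_mid.
Qed.

Lemma Rp_geod : forall b, act_geod (Rp Rs b) e0 = side Rs (Nat.iter b nxt O).
Proof.
  induction b; simpl. apply act_geod_mid.
  rewrite act_geod_mmul by auto using detR_ne, detRp_ne. rewrite IHb. apply side_rot.
Qed.

Lemma Rp_py : forall b v, 0 < py v -> 0 < py (act_pt (Rp Rs b) v).
Proof. intros; apply act_pt_py_pos; auto using detRp_pos. Qed.

Lemma Rp_act_S : forall b v, 0 < py v -> act_pt (Rp Rs (S b)) v = act_pt Rs (act_pt (Rp Rs b) v).
Proof. intros; simpl; apply act_pt_mmul; auto using detR_ne, detRp_ne. Qed.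

Lemma rot_sidef : forall k v, 0 < py v ->
  exists K, 0 < K /\ sidef (side Rs (nxt k)) (act_pt Rs v) = K * sidef (side Rs k) v.
Proof. intros k v Hv. rewrite <- side_rot. apply sidef_act; auto. rewrite detR; lra. Qed.

Lemma Rp_sidef : forall b k v, 0 < py v ->
  exists K, 0 < K /\ sidef (side Rs (Nat.iter b nxt k)) (act_pt (Rp Rs b) v) = K * sidef (side Rs k) v.
Proof.
  induction b; intros k v Hv.
  - exists 1; split; [lra|]. simpl. rewrite act_pt_mid; ring.
  - rewrite Rp_act_S by auto. simpl Nat.iter.
    destruct (IHb k v Hv) as [K1 [HK1 E1]].
    destruct (rot_sidef (Nat.iter b nxt k) (act_pt (Rp Rs b) v) (Rp_py b v Hv)) as [K2 [HK2 E2]].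
    exists (K2 * K1); split; [nra|]. rewrite E2, E1; ring.
Qed.

Lemma sideFin : forall k, (k = 1 \/ k = 2)%nat -> exists u v, 0 < u < v /\ side Rs k = mkGeod (Fin u) (Fin v).
Proof.
  destruct HG as [_ [_ [H1 [H2 _]]]]. intros k [->| ->]; simpl; auto.
Qed.

Lemma geo_pos : forall u v z, 0 < u < v -> px z = 0 -> 0 < py z -> 0 < sidef (mkGeod (Fin u) (Fin v)) z.
Proof.
  intros u v z Huv Hx Hy. unfold sidef; simpl. rewrite Hx.
  assert (0 < py z ^ 2) by (apply pow_lt; auto). assert (0 < u * v) by nra.
  apply Rmult_lt_0_compat; [lra|]. nra.
Qed.

Lemma geo_neg : forall u v z, 0 < u < v -> sidef (mkGeod (Fin u) (Fin v)) z <= 0 -> 0 < py z -> 0 < px z.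
Proof.
  intros u v z Huv H Hy. unfold sidef in H; simpl in H.
  assert (0 < py z ^ 2) by (apply pow_lt; auto).
  assert (H' : (px z - u) * (px z - v) + py z ^ 2 <= 0).
  { destruct (Rle_or_lt ((px z - u) * (px z - v) + py z ^ 2) 0); auto.
    assert (0 < (v - u) * ((px z - u) * (px z - v) + py z ^ 2)) by (apply Rmult_lt_0_compat; lra). lra. }
  destruct (Rle_or_lt (px z) u); [|lra].
  assert (0 <= (px z - u) * (px z - v)) by nra. lra.
Qed.

Lemma G1 : forall k z, (k = 1 \/ k = 2)%nat -> on_geod e0 z -> 0 < py z -> 0 < sidef (side Rs k) z.
Proof.
  intros k z Hk Hon Hy. destruct (sideFin k Hk) as [u [v [Huv E]]]. rewrite E.
  apply geo_pos; auto. unfold on_geod in Hon; rewrite sidef_e0 in Hon; auto.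
Qed.

Lemma G2 : forall k z, (k = 1 \/ k = 2)%nat -> sidef (side Rs k) z <= 0 -> 0 < py z -> 0 < sidef e0 z.
Proof.
  intros k z Hk H Hy. destruct (sideFin k Hk) as [u [v [Huv E]]]. rewrite E in H.
  rewrite sidef_e0. eapply geo_neg; eauto.
Qed.

Lemma Tbar_R : forall v, Tbar Rs v -> Tbar Rs (act_pt Rs v).
Proof.
  intros v [Hy [H0 [H1 H2]]].
  destruct (rot_sidef 0 v Hy) as [K0 [HK0 E0]].
  destruct (rot_sidef 1 v Hy) as [K1 [HK1 E1]].
  destruct (rot_sidef 2 v Hy) as [K2 [HK2 E2]].
  simpl nxt in *. change (side Rs 0) with e0 in *.
  split; [apply act_pt_py_pos; auto; rewrite detR; lra|].
  rewrite E0, E1, E2. repeat split; nra.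
Qed.

Lemma Tin_R : forall v, Tin Rs v -> Tin Rs (act_pt Rs v).
Proof.
  intros v [Hy [H0 [H1 H2]]].
  destruct (rot_sidef 0 v Hy) as [K0 [HK0 E0]].
  destruct (rot_sidef 1 v Hy) as [K1 [HK1 E1]].
  destruct (rot_sidef 2 v Hy) as [K2 [HK2 E2]].
  simpl nxt in *. change (side Rs 0) with e0 in *.
  split; [apply act_pt_py_pos; auto; rewrite detR; lra|].
  rewrite E0, E1, E2. repeat split; nra.
Qed.

Lemma Tbar_Rp : forall b v, Tbar Rs v -> Tbar Rs (act_pt (Rp Rs b) v).
Proof.
  induction b; intros v H. simpl; rewrite act_pt_mid; auto.
  rewrite Rp_act_S by (destruct H; auto). apply Tbar_R; auto.
Qed.

Lemma Tin_Rp : forall b v, Tin Rs v -> Tin Rs (act_pt (Rp Rs b) v).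
Proof.
  induction b; intros v H. simpl; rewrite act_pt_mid; auto.
  rewrite Rp_act_S by (destruct H; auto). apply Tin_R; auto.
Qed.

Lemma Tin_Tbar : forall v, Tin Rs v -> Tbar Rs v.
Proof. intros v [H [H0 [H1 H2]]]; repeat split; lra. Qed.

Lemma e0_Tbar : forall z, on_geod e0 z -> 0 < py z -> Tbar Rs z.
Proof.
  intros z Hon Hy. split; auto. split; [unfold on_geod in Hon; lra|].
  split; apply Rlt_le, G1; auto.
Qed.

Lemma p0_Tin : exists p0, Tin Rs p0.
Proof.
  destruct HG as [_ [_ [_ [_ [p [Hy [Hx Hf]]]]]]].
  exists p. destruct (rot_sidef 0 p Hy) as [K0 [HK0 E0]].
  destruct (rot_sidef 1 p Hy) as [K1 [HK1 E1]].
  rewrite Hf in E0, E1. simpl nxt in *. change (side Rs 0) with e0 in *.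
  assert (0 < sidef e0 p) by (rewrite sidef_e0; auto).
  split; auto. split; auto. rewrite E0. split; [nra|]. rewrite E1, E0. repeat apply Rmult_lt_0_compat; auto.
Qed.
End Geo.


Import ListNotations.

Fixpoint Wm (Rs : mob) (bs : list nat) : mob :=
  match bs with [] => mid | b :: r => mmul (mmul Iinv (Rp Rs b)) (Wm Rs r) end.

Definition inner (bs : list nat) : Prop := Forall (fun b => b = 1%nat \/ b = 2%nat) bs.

Definition NF (Rs g : mob) : Prop := exists a, (a < 3)%nat /\
  (peq g (Rp Rs a) \/ exists init last, inner init /\ (last < 3)%nat /\
      peq g (mmul (Rp Rs a) (Wm Rs (init ++ [last])))).

Lemma Wm_app : forall Rs bs cs, Wm Rs (bs ++ cs) = mmul (Wm Rs bs) (Wm Rs cs).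
Proof.
  induction bs; intros; simpl. rewrite mmul_mid_l; auto.
  rewrite IHbs. rewrite <- (mmul_assoc (mmul Iinv (Rp Rs a)) (Wm Rs bs) (Wm Rs cs)). reflexivity.
Qed.

Lemma II : mmul Iinv Iinv = mneg mid.
Proof. unfold mmul, Iinv, mneg, mid; simpl; apply mob_eq; ring. Qed.

Lemma madjI : madj Iinv = mneg Iinv.
Proof. unfold madj, Iinv, mneg; simpl; apply mob_eq; ring. Qed.

Section NFs.
Variable Rs : mob.
Hypothesis HG : Good Rs.

Lemma detWm : forall bs, mdet (Wm Rs bs) = 1.
Proof.
  induction bs; simpl. unfold mdet, mid; simpl; ring.
  rewrite !mdet_mmul, IHbs, Iinv_det, (detRp Rs HG); ring.
Qed.

Lemma NF_peq : forall g g', NF Rs g -> peq g' g -> NF Rs g'.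
Proof.
  intros g g' [a [Ha [H|[init [last [Hi [Hl H]]]]]]] E; exists a; split; auto.
  - left; eapply peq_trans; eauto.
  - right; exists init, last; repeat split; auto; eapply peq_trans; eauto.
Qed.

Lemma NF_mid : NF Rs mid.
Proof. exists 0%nat; split; auto. left; apply peq_refl. Qed.

Lemma Wm1 : forall l, Wm Rs [l] = mmul Iinv (Rp Rs l).
Proof. intros; simpl; rewrite mmul_mid_r; auto. Qed.

Lemma Rp_next : forall a, (a < 3)%nat -> exists a', (a' < 3)%nat /\ peq (mmul (Rp Rs a) Rs) (Rp Rs a').
Proof.
  intros a Ha. rewrite (Rp_S_r Rs).
  destruct (Nat.eq_dec a 2) as [->|Hne].
  - exists 0%nat; split; auto. apply (Rp3 Rs HG).
  - exists (S a); split; [lia|apply peq_refl].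
Qed.

Lemma NF_R : forall g, NF Rs g -> NF Rs (mmul g Rs).
Proof.
  intros g [a [Ha [H|[init [last [Hi [Hl H]]]]]]].
  - destruct (Rp_next a Ha) as [a' [Ha' E]]. exists a'; split; auto. left.
    eapply peq_trans; [apply peq_mmul; [exact H|apply peq_refl]|exact E].
  - destruct (Rp_next last Hl) as [l' [Hl' E]].
    exists a; split; auto. right. exists init, l'. repeat split; auto.
    eapply peq_trans; [apply peq_mmul; [exact H|apply peq_refl]|].
    rewrite !mmul_assoc, !Wm_app, !Wm1, !mmul_assoc.
    apply peq_mmul; [apply peq_refl|]. apply peq_mmul; [apply peq_refl|].
    apply peq_mmul; [apply peq_refl|exact E].
Qed.

Lemma NF_I : forall g, NF Rs g -> NF Rs (mmul g Iinv).
Proof.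
  intros g [a [Ha [H|[init [last [Hi [Hl H]]]]]]].
  - exists a; split; auto. right. exists [], 0%nat. repeat split; [constructor|lia|].
    eapply peq_trans; [apply peq_mmul; [exact H|apply peq_refl]|].
    simpl. rewrite !mmul_mid_r. apply peq_refl.
  - destruct (Nat.eq_dec last 0) as [->|Hne].
    + destruct init as [|i0 init0] eqn:Einit.
      1: assert (Hn : init = []) by auto.
      2: assert (Hnn : init <> []) by (rewrite Einit; discriminate);
         destruct (exists_last Hnn) as [init' [l Hil]]; rewrite <- Einit in *; clear Einit.
      all: cycle 0.
      * subst init. exists a; split; auto. left.
        eapply peq_trans; [apply peq_mmul; [exact H|apply peq_refl]|].
        simpl. rewrite !mmul_mid_r, mmul_assoc, II, mmul_mneg_r, mmul_mid_r. apply peq_mneg.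
      * exists a; split; auto. right. exists init', l.
        subst init. unfold inner in Hi. apply Forall_app in Hi. destruct Hi as [Hi1 Hi2].
        inversion Hi2; subst. repeat split; auto; [lia|].
        eapply peq_trans; [apply peq_mmul; [exact H|apply peq_refl]|].
        rewrite Wm_app, Wm1. simpl Rp. rewrite mmul_mid_r, !mmul_assoc, II, mmul_mneg_r, mmul_mid_r.
        rewrite Wm_app, Wm1, mmul_mneg_r. apply peq_mneg.
    + exists a; split; auto. right. exists (init ++ [last]), 0%nat. repeat split.
      * unfold inner. apply Forall_app; split; auto. constructor; [lia|constructor].
      * lia.
      * eapply peq_trans; [apply peq_mmul; [exact H|apply peq_refl]|].
        rewrite (Wm_app Rs (init ++ [last]) [0%nat]), Wm1. simpl Rp. rewrite mmul_mid_r, mmul_assoc.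
        apply peq_refl.
Qed.

Lemma NF_mneg : forall g, NF Rs g -> NF Rs (mneg g).
Proof. intros g H; eapply NF_peq; eauto. apply peq_mneg. Qed.

Lemma NF_gen : forall g, gen (Gamma_gens Rs) g -> NF Rs g.
Proof.
  intros g Hg; induction Hg as [|g s Hg IH Hs].
  - apply NF_mid.
  - destruct Hs as [<-|[<-|[<-|[<-|[]]]]].
    + apply NF_I; auto.
    + rewrite madjI, mmul_mneg_r. apply NF_mneg, NF_I; auto.
    + apply NF_R; auto.
    + eapply NF_peq; [|apply peq_mmul; [apply peq_refl|apply (madjR Rs HG)]].
      rewrite <- mmul_assoc. apply NF_R, NF_R; auto.
Qed.

Lemma NF_grp : forall g, in_grp (Gamma_gens Rs) g -> NF Rs g.
Proof. intros g [h [Hh E]]; eapply NF_peq; eauto; apply NF_gen; auto. Qed.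

End NFs.


Import ListNotations.

Lemma gen_det : forall S g, (forall s, In s S -> mdet s = 1) -> gen S g -> mdet g = 1.
Proof.
  intros S g HS Hg; induction Hg. unfold mdet, mid; simpl; ring.
  rewrite mdet_mmul, IHHg, HS; auto; ring.
Qed.

Lemma grp_det : forall S g, (forall s, In s S -> mdet s = 1) -> in_grp S g -> mdet g = 1.
Proof. intros S g HS [h [Hh E]]. rewrite (peq_mdet _ _ E). eapply gen_det; eauto. Qed.

Section Geo2.
Variable Rs : mob.
Hypothesis HG : Good Rs.

Lemma dW : forall bs, mdet (Wm Rs bs) = 1.
Proof. exact (detWm Rs HG). Qed.
Lemma dR : forall n, mdet (Rp Rs n) = 1.
Proof. exact (detRp Rs HG). Qed.

Lemma Gdet : forall s, In s (Gamma_gens Rs) -> mdet s = 1.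
Proof.
  intros s [<-|[<-|[<-|[<-|[]]]]]; rewrite ?mdet_madj; try apply Iinv_det; apply (detR Rs HG).
Qed.

Lemma Gm_det : forall g, in_grp (Gamma_gens Rs) g -> mdet g = 1.
Proof. intros; eapply grp_det; eauto using Gdet. Qed.

Lemma act11 : forall A B v, mdet A = 1 -> mdet B = 1 -> 0 < py v ->
  act_pt (mmul A B) v = act_pt A (act_pt B v).
Proof. intros A B v HA HB Hv; apply act_pt_mmul; auto; [rewrite HA|rewrite HB]; lra. Qed.

Lemma py1 : forall A v, mdet A = 1 -> 0 < py v -> 0 < py (act_pt A v).
Proof. intros A v HA Hv; apply act_pt_py_pos; auto; rewrite HA; lra. Qed.

Lemma Wm_cons_act : forall b r v, 0 < py v ->
  act_pt (Wm Rs (b :: r)) v = act_pt Iinv (act_pt (Rp Rs b) (act_pt (Wm Rs r) v)).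
Proof.
  intros b r v Hv. simpl.
  rewrite act11; auto using dW.
  2: rewrite mdet_mmul, Iinv_det, dR; ring.
  rewrite act11; auto using Iinv_det, dR, py1, dW.
Qed.

Lemma iter_12 : forall b, (b = 1 \/ b = 2)%nat -> Nat.iter b nxt 0%nat = b.
Proof. intros b [->| ->]; reflexivity. Qed.

Lemma Tin_side : forall w k, Tin Rs w -> 0 < sidef (side Rs k) w.
Proof. intros w [|[|k]] [H [H0 [H1 H2]]]; simpl; auto. Qed.

Lemma Wgeo : forall init last v, inner init -> Tbar Rs v ->
  sidef e0 (act_pt (Wm Rs (init ++ [last])) v) <= 0 /\
  (init <> [] -> sidef e0 (act_pt (Wm Rs (init ++ [last])) v) < 0).
Proof.
  induction init as [|b init IH]; intros last v Hi Hv.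
  - simpl app. rewrite Wm_cons_act by (destruct Hv; auto). simpl Wm. rewrite act_pt_mid.
    assert (Ht := Tbar_Rp Rs HG last v Hv). destruct Ht as [Hy [H0 _]].
    destruct (Iinv_sign _ Hy) as [K [HK E]]. rewrite E. split; [nra|]. intros C; congruence.
  - inversion Hi as [|? ? Hb Hi']; subst.
    destruct (IH last v Hi' Hv) as [H1 _].
    simpl app. rewrite Wm_cons_act by (destruct Hv; auto).
    set (w := act_pt (Wm Rs (init ++ [last])) v) in *.
    assert (Hw : 0 < py w) by (apply py1; [apply dW|destruct Hv; auto]).
    destruct (Rp_sidef Rs HG b 0 w Hw) as [K [HK E]]. rewrite iter_12 in E by auto.
    change (side Rs 0) with e0 in E.
    assert (H2 : sidef (side Rs b) (act_pt (Rp Rs b) w) <= 0) by (rewrite E; nra).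
    apply (G2 Rs HG) in H2; auto; [|apply (Rp_py Rs HG); auto].
    destruct (Iinv_sign (act_pt (Rp Rs b) w)) as [K' [HK' E']]; [apply (Rp_py Rs HG); auto|].
    rewrite E'. split; [nra|intros _; nra].
Qed.

Lemma WgeoT : forall init last v, inner init -> Tin Rs v ->
  sidef e0 (act_pt (Wm Rs (init ++ [last])) v) < 0.
Proof.
  intros init last v Hi Hv. destruct init as [|b init].
  - simpl app. rewrite Wm_cons_act by (destruct Hv; auto). simpl Wm. rewrite act_pt_mid.
    assert (Ht := Tin_Rp Rs HG last v Hv). destruct Ht as [Hy [H0 _]].
    destruct (Iinv_sign _ Hy) as [K [HK E]]. rewrite E. nra.
  - apply (Wgeo (b :: init) last v Hi (Tin_Tbar Rs v Hv)). discriminate.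
Qed.

Lemma Wpy : forall bs v, 0 < py v -> 0 < py (act_pt (Wm Rs bs) v).
Proof. intros; apply py1; auto; apply dW. Qed.

Lemma Rp_flip : forall a u, (a = 1 \/ a = 2)%nat -> 0 < py u -> sidef e0 u <= 0 ->
  0 < sidef e0 (act_pt (Rp Rs a) u).
Proof.
  intros a u Ha Hu H.
  destruct (Rp_sidef Rs HG a 0 u Hu) as [K [HK E]]. rewrite iter_12 in E by auto.
  change (side Rs 0) with e0 in E.
  apply (G2 Rs HG a); auto; [rewrite E; nra|apply (Rp_py Rs HG); auto].
Qed.

Lemma a_cases : forall a, (a < 3)%nat -> a = 0%nat \/ (a = 1 \/ a = 2)%nat.
Proof. intros; lia. Qed.

Lemma pull : forall h z, mdet h = 1 -> 0 < py z -> exists v, 0 < py v /\ z = act_pt h v.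
Proof.
  intros h z Hh Hz. exists (act_pt (madj h) z). split.
  - apply py1; auto. rewrite mdet_madj; auto.
  - rewrite act_pt_madj_r; auto; lra.
Qed.

Lemma L2core : forall h w, in_grp (Gamma_gens Rs) h -> Tin Rs w -> on_geod (act_geod h e0) w -> False.
Proof.
  intros h w Hh Hw Hon.
  assert (Hd := Gm_det h Hh).
  destruct (NF_grp Rs HG h Hh) as [a [Ha [H|[init [last [Hi [Hl H]]]]]]].
  - rewrite (act_geod_peq _ _ _ H), (Rp_geod Rs HG) in Hon.
    assert (X := Tin_side w (Nat.iter a nxt 0%nat) Hw). unfold on_geod in Hon; lra.
  - destruct Hw as [Hwy Hw'].
    destruct (pull h w Hd Hwy) as [v [Hv ->]].
    apply on_act in Hon; [|rewrite Hd; lra|auto].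
    assert (Tv := e0_Tbar Rs HG v Hon Hv).
    destruct (Wgeo init last v Hi Tv) as [W1 _].
    rewrite (act_pt_peq _ _ _ H), act11 in Hw'; auto using dR, dW.
    destruct (Rp_sidef Rs HG a 0%nat _ (Wpy (init ++ [last]) v Hv)) as [K [HK E]].
    change (side Rs 0) with e0 in E.
    assert (X : 0 < sidef (side Rs (Nat.iter a nxt 0%nat)) (act_pt (Rp Rs a) (act_pt (Wm Rs (init ++ [last])) v))).
    { apply Tin_side. split; [apply (Rp_py Rs HG), Wpy; auto|exact Hw']. }
    rewrite E in X. nra.
Qed.


Lemma L1core : forall h z, in_grp (Gamma_gens Rs) h -> 0 < py z -> on_geod e0 z ->
  on_geod (act_geod h e0) z -> same_unor e0 (act_geod h e0).
Proof.
  intros h z Hh Hz Hon0 Hon.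
  assert (Hd := Gm_det h Hh).
  destruct (NF_grp Rs HG h Hh) as [a [Ha [H|[init [last [Hi [Hl H]]]]]]].
  - rewrite (act_geod_peq _ _ _ H), (Rp_geod Rs HG) in *.
    destruct (a_cases a Ha) as [->|Ha12]; [left; reflexivity|].
    rewrite iter_12 in Hon by auto. exfalso.
    assert (X := G1 Rs HG a z Ha12 Hon0 Hz). unfold on_geod in Hon; lra.
  - destruct (pull h z Hd Hz) as [v [Hv ->]].
    assert (Hv0 : on_geod e0 v) by (apply on_act in Hon; auto; rewrite Hd; lra).
    assert (Tv := e0_Tbar Rs HG v Hv0 Hv).
    destruct (Wgeo init last v Hi Tv) as [W1 W2].
    rewrite (act_pt_peq _ _ _ H), act11 in Hon0; auto using dR, dW.
    set (u := act_pt (Wm Rs (init ++ [last])) v) in *.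
    assert (Hu : 0 < py u) by (apply Wpy; auto).
    destruct (a_cases a Ha) as [->|Ha12].
    + simpl Rp in Hon0. rewrite act_pt_mid in Hon0.
      destruct init as [|b init'].
      2: { exfalso. specialize (W2 ltac:(discriminate)). unfold on_geod in Hon0; lra. }
      rewrite (act_geod_peq _ _ _ H). simpl Rp. simpl app. rewrite mmul_mid_l, Wm1.
      rewrite act_geod_mmul by (rewrite ?Iinv_det, ?dR; lra).
      rewrite (Rp_geod Rs HG).
      destruct (a_cases last Hl) as [->|Hl12].
      * simpl. rewrite Iinv_e0. right. reflexivity.
      * exfalso. unfold u in Hon0. simpl app in Hon0.
        rewrite Wm_cons_act in Hon0 by auto. simpl Wm in Hon0. rewrite act_pt_mid in Hon0.
        destruct (Iinv_sign (act_pt (Rp Rs last) v)) as [K [HK E]]; [apply (Rp_py Rs HG); auto|].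
        unfold on_geod in Hon0. rewrite E in Hon0.
        assert (E0 : sidef e0 (act_pt (Rp Rs last) v) = 0) by nra.
        destruct (Rp_sidef Rs HG last 0%nat v Hv) as [K' [HK' E']].
        rewrite iter_12 in E' by auto. change (side Rs 0) with e0 in E'.
        unfold on_geod in Hv0. rewrite Hv0 in E'.
        assert (X := G1 Rs HG last (act_pt (Rp Rs last) v) Hl12 E0 (Rp_py Rs HG _ _ Hv)). lra.
    + exfalso. destruct (Rp_sidef Rs HG a 0%nat u Hu) as [K [HK E]].
      change (side Rs 0) with e0 in E. rewrite iter_12 in E by auto.
      assert (X : sidef (side Rs a) (act_pt (Rp Rs a) u) <= 0) by (rewrite E; nra).
      apply (G2 Rs HG a) in X; auto; [|apply (Rp_py Rs HG); auto].
      unfold on_geod in Hon0; lra.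
Qed.

Lemma L3core : forall h, in_grp (Gamma_gens Rs) h -> act_geod h e0 = e0 -> peq h mid.
Proof.
  intros h Hh He.
  assert (Hd := Gm_det h Hh).
  destruct (NF_grp Rs HG h Hh) as [a [Ha [H|[init [last [Hi [Hl H]]]]]]].
  - rewrite (act_geod_peq _ _ _ H), (Rp_geod Rs HG) in He.
    destruct (a_cases a Ha) as [->|Ha12]; [exact H|].
    rewrite iter_12 in He by auto. exfalso.
    destruct (sideFin Rs HG a Ha12) as [u [v [_ E]]]. rewrite E in He. discriminate.
  - exfalso. destruct (p0_Tin Rs HG) as [p0 Hp0].
    assert (Hp0' := Hp0). destruct Hp0' as [Hpy [Hpe _]].
    assert (Hhp : 0 < sidef e0 (act_pt h p0)).
    { destruct (sidef_act h e0 p0) as [K [HK E]]; [rewrite Hd; lra|auto|].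
      rewrite He in E. rewrite E. nra. }
    assert (WT := WgeoT init last p0 Hi Hp0).
    rewrite (act_pt_peq _ _ _ H), act11 in Hhp; auto using dR, dW.
    destruct (a_cases a Ha) as [->|Ha12].
    + simpl Rp in Hhp. rewrite act_pt_mid in Hhp. lra.
    + set (q0 := act_pt Iinv p0).
      assert (Hq : 0 < py q0) by (apply py1; auto using Iinv_det).
      assert (Hq0 : sidef e0 q0 < 0).
      { destruct (Iinv_sign p0 Hpy) as [K [HK E]]. unfold q0; rewrite E. nra. }
      assert (Hhq : sidef e0 (act_pt h q0) < 0).
      { destruct (sidef_act h e0 q0) as [K [HK E]]; [rewrite Hd; lra|auto|].
        rewrite He in E. rewrite E. nra. }
      unfold q0 in Hhq. rewrite <- act11 in Hhq by (auto using Iinv_det).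
      assert (HhI : peq (mmul h Iinv) (mmul (Rp Rs a) (mmul (Wm Rs (init ++ [last])) Iinv))).
      { rewrite <- mmul_assoc. apply peq_mmul; auto using peq_refl. }
      rewrite (act_pt_peq _ _ _ HhI) in Hhq.
      destruct (Nat.eq_dec last 0) as [->|Hne].
      * destruct init as [|i0 init0] eqn:Einit.
        -- cbn [app Wm Rp] in Hhq. rewrite !mmul_mid_r, II, mmul_mneg_r, mmul_mid_r, act_pt_mneg in Hhq.
           assert (X := Tin_Rp Rs HG a p0 Hp0). destruct X as [_ [X _]]. lra.
        -- assert (Hnn : init <> []) by (rewrite Einit; discriminate).
           destruct (exists_last Hnn) as [init' [l Hil]]. rewrite <- Einit in *. clear Einit.
           subst init. unfold inner in Hi. apply Forall_app in Hi. destruct Hi as [Hi1 Hi2].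
           inversion Hi2 as [|? ? Hl12 _]; subst.
           rewrite Wm_app, Wm1 in Hhq. simpl Rp in Hhq.
           rewrite mmul_mid_r, !mmul_assoc, II, mmul_mneg_r, mmul_mid_r in Hhq.
           rewrite mmul_mneg_r, act_pt_mneg, act11 in Hhq; auto using dR, dW.
           assert (X := WgeoT init' l p0 Hi1 Hp0).
           assert (Y := Rp_flip a (act_pt (Wm Rs (init' ++ [l])) p0) Ha12 (Wpy _ _ Hpy) ltac:(lra)). lra.
      * assert (Hi' : inner (init ++ [last])).
        { unfold inner. apply Forall_app; split; auto. constructor; [lia|constructor]. }
        replace (mmul (Wm Rs (init ++ [last])) Iinv) with (Wm Rs ((init ++ [last]) ++ [0%nat])) in Hhq
          by (rewrite (Wm_app Rs _ [0%nat]), Wm1; simpl Rp; rewrite mmul_mid_r; auto).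
        rewrite act11 in Hhq; auto using dR, dW.
        assert (X := WgeoT (init ++ [last]) 0%nat p0 Hi' Hp0).
        assert (Y := Rp_flip a (act_pt (Wm Rs ((init ++ [last]) ++ [0%nat])) p0) Ha12 (Wpy _ _ Hpy) ltac:(lra)). lra.
Qed.

End Geo2.


Import ListNotations.

Lemma gen_mul : forall S g h, gen S g -> gen S h -> gen S (mmul g h).
Proof.
  intros S g h Hg Hh. induction Hh as [|h s Hh IH Hs].
  - rewrite mmul_mid_r; auto.
  - rewrite <- mmul_assoc. constructor; auto.
Qed.

Lemma in_grp_mul : forall S g h, in_grp S g -> in_grp S h -> in_grp S (mmul g h).
Proof.
  intros S g h [g' [Hg Eg]] [h' [Hh Eh]]. exists (mmul g' h'); split.
  apply gen_mul; auto. apply peq_mmul; auto.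
Qed.

Lemma in_grp_gen : forall S s, In s S -> in_grp S s.
Proof. intros S s H. exists s; split; [|apply peq_refl]. rewrite <- mmul_mid_l. constructor; auto. constructor. Qed.

Lemma in_grp_mid : forall S, in_grp S mid.
Proof. intros; exists mid; split; [constructor|apply peq_refl]. Qed.

Lemma in_grp_peq : forall S g g', in_grp S g -> peq g' g -> in_grp S g'.
Proof. intros S g g' [h [Hh E]] E'. exists h; split; auto. eapply peq_trans; eauto. Qed.

Lemma grev_grev : forall l, grev (grev l) = l.
Proof. intros []; reflexivity. Qed.

Lemma same_unor_sym : forall l l', same_unor l l' -> same_unor l' l.
Proof. intros l l' [->| ->]; [left|right]; rewrite ?grev_grev; auto. Qed.


Lemma same_unor_trans : forall a b c, same_unor a b -> same_unor b c -> same_unor a c.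
Proof.
  intros a b c [->| ->] [->| ->]; unfold same_unor; rewrite ?grev_grev; auto.
Qed.

Lemma same_unor_grev : forall l l', same_unor l l' -> same_unor (grev l) l'.
Proof. intros l l' [->| ->]; unfold same_unor; rewrite ?grev_grev; auto. Qed.

Lemma same_unor_act : forall g l l', same_unor l l' -> same_unor (act_geod g l) (act_geod g l').
Proof. intros g l l' [->| ->]; [left|right]; rewrite ?act_geod_grev; auto. Qed.

Lemma same_unor_on : forall l l' z, same_unor l l' -> on_geod l z -> on_geod l' z.
Proof.
  intros l l' z [->| ->] H; auto. unfold on_geod in *. rewrite sidef_grev in H. lra.
Qed.

Lemma grev_act_I : forall g, mdet g <> 0 -> grev (act_geod g e0) = act_geod (mmul g Iinv) e0.
Proof.
  intros g Hg. rewrite act_geod_mmul by (auto; rewrite Iinv_det; lra).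
  rewrite Iinv_e0, act_geod_grev; auto.
Qed.

Section Grp.
Variable Rs : mob.
Hypothesis HG : Good Rs.

Notation Gm := (in_grp (Gamma_gens Rs)).
Notation Go := (in_grp (GammaO_gens Rs)).

Lemma Gm_I : Gm Iinv.
Proof. apply in_grp_gen; left; auto. Qed.
Lemma Gm_R : Gm Rs.
Proof. apply in_grp_gen; right; right; left; auto. Qed.
Lemma Gm_RR : Gm (mmul Rs Rs).
Proof. apply in_grp_mul; apply Gm_R. Qed.

Lemma Gm_adj : forall g, Gm g -> Gm (madj g).
Proof.
  intros g [h [Hh E]]. apply in_grp_peq with (madj h); [|apply peq_madj; auto].
  clear E. induction Hh as [|h s Hh IH Hs].
  - replace (madj mid) with mid by (unfold madj, mid; simpl; apply mob_eq; ring). apply in_grp_mid.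
  - rewrite madj_mmul. apply in_grp_mul; auto.
    destruct Hs as [<-|[<-|[<-|[<-|[]]]]]; rewrite ?madj_madj; apply in_grp_gen; simpl; tauto.
Qed.

Lemma Go_Gm : forall g, Go g -> Gm g.
Proof.
  intros g [h [Hh E]]. apply in_grp_peq with h; auto. clear E.
  induction Hh as [|h s Hh IH Hs]; [apply in_grp_mid|].
  apply in_grp_mul; auto.
  destruct Hs as [<-|[<-|[<-|[<-|[]]]]].
  - apply Gm_R.
  - apply Gm_adj, Gm_R.
  - repeat apply in_grp_mul; auto using Gm_I, Gm_R.
  - repeat apply in_grp_mul; auto using Gm_I, Gm_R, Gm_adj.
Qed.

Lemma Gm_detv : forall g, Gm g -> mdet g = 1.
Proof. apply (Gm_det Rs HG). Qed.

Lemma leaf_form : forall l, is_leaf Rs l -> exists g, Gm g /\ same_unor l (act_geod g e0).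
Proof.
  intros l [g [s [Hg [Hs Hl]]]].
  destruct Hs as [<-|[<-|[<-|[]]]].
  - exists g; auto.
  - exists (mmul g Rs); split; [apply in_grp_mul; auto using Gm_R|].
    rewrite act_geod_mmul; auto; [rewrite Gm_detv; auto; lra| rewrite (detR Rs HG); lra].
  - exists (mmul g (mmul Rs Rs)); split; [apply in_grp_mul; auto using Gm_RR|].
    rewrite act_geod_mmul; auto; [rewrite Gm_detv; auto; lra| rewrite mdet_mmul, (detR Rs HG); lra].
Qed.

Lemma leaf_of : forall g l, Gm g -> same_unor l (act_geod g e0) -> is_leaf Rs l.
Proof. intros g l Hg H. exists g, e0; repeat split; auto. left; auto. Qed.

Lemma L1 : forall g g' z, Gm g -> Gm g' -> 0 < py z ->
  on_geod (act_geod g e0) z -> on_geod (act_geod g' e0) z ->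
  same_unor (act_geod g e0) (act_geod g' e0).
Proof.
  intros g g' z Hg Hg' Hz H1 H2.
  assert (Dg := Gm_detv g Hg). assert (Dg' := Gm_detv g' Hg').
  set (h := mmul (madj g) g').
  assert (Hh : Gm h) by (apply in_grp_mul; auto using Gm_adj).
  assert (Dh : mdet h = 1) by (apply Gm_detv; auto).
  assert (Eg' : act_geod g' e0 = act_geod g (act_geod h e0)).
  { unfold h. rewrite <- act_geod_mmul by (rewrite ?mdet_mmul, ?mdet_madj, ?Dg, ?Dg'; lra). rewrite <- mmul_assoc, mdet1_madj_r, mmul_mid_l; auto. }
  destruct (pull g z Dg Hz) as [v [Hv ->]].
  rewrite Eg' in *.
  apply on_act in H1; [|lra|auto]. apply on_act in H2; [|lra|auto].
  apply same_unor_act. apply (L1core Rs HG h v); auto.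
Qed.

Lemma L3 : forall g g', Gm g -> Gm g' -> act_geod g e0 = act_geod g' e0 -> peq g' g.
Proof.
  intros g g' Hg Hg' E.
  assert (Dg := Gm_detv g Hg). assert (Dg' := Gm_detv g' Hg').
  set (h := mmul (madj g) g').
  assert (Hh : Gm h) by (apply in_grp_mul; auto using Gm_adj).
  assert (He : act_geod h e0 = e0).
  { unfold h. rewrite act_geod_mmul by (rewrite ?mdet_madj; lra). rewrite <- E.
    rewrite <- act_geod_mmul by (rewrite ?mdet_madj; lra). rewrite mdet1_madj_l; auto. apply act_geod_mid. }
  assert (Hp := L3core Rs HG h Hh He).
  replace g' with (mmul g h) by (unfold h; rewrite <- mmul_assoc, mdet1_madj_r, mmul_mid_l; auto).
  rewrite <- (mmul_mid_r g) at 2. apply peq_mmul; auto using peq_refl.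
Qed.

End Grp.


Import ListNotations.

Section Step.
Variable Rs : mob.
Hypothesis HG : Good Rs.
Notation Gm := (in_grp (Gamma_gens Rs)).

Lemma side_k : forall j, (j = 1 \/ j = 2)%nat -> exists k, (k = Rs \/ k = mmul Rs Rs) /\ side Rs j = act_geod k e0.
Proof. intros j [->| ->]; [exists Rs|exists (mmul Rs Rs)]; simpl; auto. Qed.

Lemma Gm_k : forall k, (k = Rs \/ k = mmul Rs Rs) -> Gm k.
Proof. intros k [->| ->]; [apply Gm_R|apply Gm_RR]. Qed.

Lemma step_core : forall N t0 t1 l1, 0 < mdet N -> t0 < t1 ->
  on_geod e0 (cpt N t0) -> (forall s, t0 < s -> left_of e0 (cpt N s)) ->
  (forall s, t0 < s < t1 -> forall h, Gm h -> ~ on_geod (act_geod h e0) (cpt N s)) ->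
  (exists h, Gm h /\ same_unor l1 (act_geod h e0)) ->
  on_geod l1 (cpt N t1) -> (forall s, s < t1 -> right_of l1 (cpt N s)) ->
  exists k, (k = Rs \/ k = mmul Rs Rs) /\ l1 = act_geod (mmul k Iinv) e0.
Proof.
  intros N t0 t1 l1 HN Ht Hon0 Hleft Hno [h1 [Hh1 Hl1]] Hon1 Hright.
  assert (Hpos : forall j, (j = 1 \/ j = 2)%nat -> forall s, t0 < s < t1 -> 0 < sidef (side Rs j) (cpt N s)).
  { intros j Hj s Hs.
    destruct (side_k j Hj) as [k [Hk Ek]].
    assert (F0 : 0 < sidef (side Rs j) (cpt N t0)) by (apply (G1 Rs HG); auto; apply cpt_py; auto).
    destruct (Rtotal_order 0 (sidef (side Rs j) (cpt N s))) as [X|[X|X]]; auto; exfalso.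
    - apply (Hno s Hs k (Gm_k k Hk)). rewrite <- Ek. unfold on_geod; auto.
    - destruct (ivt_curve N (side Rs j) t0 s HN ltac:(lra) F0 X) as [s' [Hs' E']].
      apply (Hno s' ltac:(lra) k (Gm_k k Hk)). rewrite <- Ek. exact E'. }
  assert (Hge : forall j, (j = 1 \/ j = 2)%nat -> 0 <= sidef (side Rs j) (cpt N t1)).
  { intros j Hj. destruct (side_k j Hj) as [k [Hk Ek]].
    assert (F0 : 0 < sidef (side Rs j) (cpt N t0)) by (apply (G1 Rs HG); auto; apply cpt_py; auto).
    destruct (Rle_or_lt 0 (sidef (side Rs j) (cpt N t1))) as [X|X]; auto; exfalso.
    destruct (ivt_curve N (side Rs j) t0 t1 HN Ht F0 X) as [s' [Hs' E']].
    apply (Hno s' Hs' k (Gm_k k Hk)). rewrite <- Ek. exact E'. }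
  set (w := cpt N t1) in *.
  assert (Hw : 0 < py w) by (apply cpt_py; auto).
  assert (He : 0 < sidef e0 w) by (apply Hleft; auto).
  assert (Honh : on_geod (act_geod h1 e0) w) by (eapply same_unor_on; eauto).
  assert (Hj : exists j, (j = 1 \/ j = 2)%nat /\ sidef (side Rs j) w = 0).
  { assert (G1' := Hge 1%nat ltac:(auto)). assert (G2' := Hge 2%nat ltac:(auto)).
    destruct (Rle_lt_or_eq_dec _ _ G1') as [X1|X1]; [|exists 1%nat; auto].
    destruct (Rle_lt_or_eq_dec _ _ G2') as [X2|X2]; [|exists 2%nat; auto].
    exfalso. apply (L2core Rs HG h1 w Hh1); auto. repeat split; auto. }
  destruct Hj as [j [Hj Hz]].
  destruct (side_k j Hj) as [k [Hk Ek]].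
  assert (Hsu : same_unor (act_geod k e0) (act_geod h1 e0)).
  { apply (L1 Rs HG k h1 w (Gm_k k Hk) Hh1 Hw); auto. rewrite <- Ek; exact Hz. }
  assert (Hsu' : same_unor l1 (act_geod k e0)) by (eapply same_unor_trans; [exact Hl1|apply same_unor_sym; auto]).
  exists k; split; auto.
  destruct Hsu' as [E|E].
  - exfalso. set (sm := (t0 + t1) / 2).
    assert (A1 := Hright sm ltac:(unfold sm; lra)).
    assert (A2 := Hpos j Hj sm ltac:(unfold sm; lra)).
    unfold right_of in A1. rewrite E, <- Ek in A1. lra.
  - rewrite E. apply grev_act_I. destruct Hk as [->| ->]; rewrite ?mdet_mmul, (detR Rs HG); lra.
Qed.


Definition NoMid (M : mob) (t : Z -> R) : Prop :=
  forall (m : Z) s, t m < s < t (m + 1)%Z -> forall l, is_leaf Rs l -> ~ on_geod l (cpt M s).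

Lemma cpt_transfer : forall g M s, mdet g = 1 -> 0 < mdet M ->
  cpt M s = act_pt g (cpt (mmul (madj g) M) s).
Proof.
  intros g M s Hg HM. unfold cpt.
  rewrite act_pt_mmul; [| rewrite mdet_madj; lra | lra | simpl; apply exp_pos].
  rewrite act_pt_madj_r; auto; [lra|]. apply act_pt_py_pos; auto. simpl; apply exp_pos.
Qed.

Lemma stepF : forall M ell t, 0 < mdet M ->
  (forall m, crosses_RL M (ell m) (t m)) -> (forall m, is_leaf Rs (ell m)) ->
  (forall m, t m < t (m + 1)%Z) -> NoMid M t ->
  forall m g, Gm g -> ell m = act_geod g e0 ->
  exists k, (k = Rs \/ k = mmul Rs Rs) /\ ell (m + 1)%Z = act_geod (mmul g (mmul k Iinv)) e0.
Proof.
  intros M ell t HM Hcr Hlf Hmono Hnm m g Hg Em.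
  assert (Dg := Gm_detv Rs HG g Hg).
  set (N := mmul (madj g) M).
  assert (HN : 0 < mdet N) by (unfold N; rewrite mdet_mmul, mdet_madj, Dg; lra).
  assert (Hc : forall s, cpt M s = act_pt g (cpt N s)) by (intros; apply cpt_transfer; auto).
  assert (Hgp : 0 < mdet g) by lra.
  assert (HNp : forall s, 0 < py (cpt N s)) by (intros; apply cpt_py; auto).
  set (l1 := act_geod (madj g) (ell (m + 1)%Z)).
  assert (El1 : ell (m + 1)%Z = act_geod g l1) by (unfold l1; rewrite act_geod_madj_r; auto; lra).
  destruct (Hcr m) as [C0 [_ C2]]. destruct (Hcr (m + 1)%Z) as [D0 [D1 _]].
  destruct (step_core N (t m) (t (m + 1)%Z) l1 HN (Hmono m)) as [k [Hk Ek]].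
  - rewrite Em, Hc in C0. apply on_act in C0; auto.
  - intros s Hs. specialize (C2 s Hs). rewrite Em, Hc in C2. apply left_act in C2; auto.
  - intros s Hs h Hh Hon. apply (Hnm m s Hs (act_geod (mmul g h) e0)).
    + apply (leaf_of Rs (mmul g h)); [apply in_grp_mul; auto|left; auto].
    + rewrite Hc, act_geod_mmul by (rewrite ?(Gm_detv Rs HG h Hh); lra).
      apply on_act; auto.
  - destruct (leaf_form Rs HG (ell (m + 1)%Z) (Hlf _)) as [h [Hh Hsu]].
    exists (mmul (madj g) h); split; [apply in_grp_mul; auto; apply Gm_adj; auto|].
    unfold l1. rewrite act_geod_mmul by (rewrite ?mdet_madj, ?(Gm_detv Rs HG h Hh); lra).
    apply same_unor_act; auto.
  - rewrite El1, Hc in D0. apply on_act in D0; auto.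
  - intros s Hs. specialize (D1 s Hs). rewrite El1, Hc in D1. apply right_act in D1; auto.
  - exists k; split; auto. rewrite El1, Ek.
    rewrite (act_geod_mmul g) by (destruct Hk as [->| ->]; rewrite ?mdet_mmul, ?Iinv_det, ?(detR Rs HG); lra). auto.
Qed.

End Step.


Import ListNotations.

Lemma cpt_rev : forall M s, 0 < mdet M -> cpt (mmul M Iinv) s = cpt M (- s).
Proof.
  intros M s HM. unfold cpt.
  rewrite act_pt_mmul; [|lra|rewrite Iinv_det; lra|simpl; apply exp_pos].
  f_equal. unfold act_pt, Iinv, mdet; cbn [px py ma mb mc md].
  assert (H := exp_pos s). rewrite exp_Ropp. apply pt_eq; field; lra.
Qed.

Lemma is_leaf_grev : forall Rs l, is_leaf Rs l -> is_leaf Rs (grev l).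
Proof.
  intros Rs l [g [s [Hg [Hs Hl]]]]. exists g, s; repeat split; auto. apply same_unor_grev; auto.
Qed.

Section Main.
Variable Rs : mob.
Hypothesis HG : Good Rs.
Notation Gm := (in_grp (Gamma_gens Rs)).

Lemma stepB : forall M ell t, 0 < mdet M ->
  (forall m, crosses_RL M (ell m) (t m)) -> (forall m, is_leaf Rs (ell m)) ->
  (forall m, t m < t (m + 1)%Z) -> NoMid Rs M t ->
  forall m g, Gm g -> ell m = act_geod g e0 ->
  exists k, (k = Rs \/ k = mmul Rs Rs) /\ ell (m - 1)%Z = act_geod (mmul g (mmul Iinv k)) e0.
Proof.
  intros M ell t HM Hcr Hlf Hmono Hnm m g Hg Em.
  set (M' := mmul M Iinv).
  set (ell' := fun m => grev (ell (- m)%Z)).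
  set (t' := fun m => - t (- m)%Z).
  assert (HM' : 0 < mdet M') by (unfold M'; rewrite mdet_mmul, Iinv_det; lra).
  assert (Hc : forall s, cpt M' s = cpt M (- s)) by (intros; apply cpt_rev; auto).
  assert (Hmono' : forall m, t' m < t' (m + 1)%Z).
  { intros m'. unfold t'. assert (X := Hmono (- (m' + 1))%Z).
    replace (- (m' + 1) + 1)%Z with (- m')%Z in X by lia. lra. }
  assert (Hcr' : forall m, crosses_RL M' (ell' m) (t' m)).
  { intros m'. destruct (Hcr (- m')%Z) as [C0 [C1 C2]]. unfold ell', t'. split; [|split].
    - unfold on_geod in *. rewrite Hc, sidef_grev, Ropp_involutive, C0; ring.
    - intros s Hs. unfold right_of. rewrite Hc, sidef_grev.
      assert (X := C2 (- s) ltac:(lra)). unfold left_of in X. lra.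
    - intros s Hs. unfold left_of. rewrite Hc, sidef_grev.
      assert (X := C1 (- s) ltac:(lra)). unfold right_of in X. lra. }
  assert (Hlf' : forall m, is_leaf Rs (ell' m)) by (intros; unfold ell'; apply is_leaf_grev; auto).
  assert (Hnm' : NoMid Rs M' t').
  { intros m' s Hs l Hl Hon. rewrite Hc in Hon.
    refine (Hnm (- (m' + 1))%Z (- s) _ l Hl Hon). unfold t' in Hs.
    replace (- (m' + 1) + 1)%Z with (- m')%Z by lia. lra. }
  assert (Dg := Gm_detv Rs HG g Hg).
  assert (Em' : ell' (- m)%Z = act_geod (mmul g Iinv) e0).
  { unfold ell'. rewrite Z.opp_involutive, Em. apply grev_act_I. lra. }
  destruct (stepF Rs HG M' ell' t' HM' Hcr' Hlf' Hmono' Hnm' (- m)%Z (mmul g Iinv)) as [k [Hk Ek]]; auto.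
  { apply in_grp_mul; auto using Gm_I. }
  exists k; split; auto.
  unfold ell' in Ek. replace (- (- m + 1))%Z with (m - 1)%Z in Ek by lia.
  rewrite <- (grev_grev (ell (m - 1)%Z)), Ek.
  assert (Dk : mdet k = 1) by (destruct Hk as [->| ->]; rewrite ?mdet_mmul, (detR Rs HG); ring).
  rewrite grev_act_I by (rewrite !mdet_mmul, Dg, Dk, Iinv_det; lra).
  apply act_geod_peq.
  rewrite !mmul_assoc. apply peq_mmul; [apply peq_refl|]. apply peq_mmul; [apply peq_refl|].
  rewrite II, mmul_mneg_r, mmul_mid_r. apply peq_mneg.
Qed.


Lemma mono_lt : forall (t : Z -> R), (forall m, t m < t (m + 1)%Z) -> forall a b, (a < b)%Z -> t a < t b.
Proof.
  intros t Ht.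
  assert (H : forall n a, t a < t (a + Z.of_nat (S n))%Z).
  { induction n; intros a.
    - replace (a + Z.of_nat 1)%Z with (a + 1)%Z by lia. auto.
    - specialize (IHn a). specialize (Ht (a + Z.of_nat (S n))%Z).
      replace (a + Z.of_nat (S (S n)))%Z with (a + Z.of_nat (S n) + 1)%Z by lia. lra. }
  intros a b Hab. specialize (H (Z.to_nat (b - a - 1)) a).
  replace (a + Z.of_nat (S (Z.to_nat (b - a - 1))))%Z with b in H by lia. auto.
Qed.

Lemma mono_le : forall (t : Z -> R), (forall m, t m < t (m + 1)%Z) -> forall a b, (a <= b)%Z -> t a <= t b.
Proof.
  intros t Ht a b Hab. destruct (Z.eq_dec a b) as [->|Hne]; [lra|].
  apply Rlt_le, mono_lt; auto; lia.
Qed.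

Lemma nomid_of : forall M ell t, 0 < mdet M ->
  (forall m, crosses_RL M (ell m) (t m)) -> (forall m, is_leaf Rs (ell m)) ->
  (forall m, t m < t (m + 1)%Z) ->
  (forall l, is_leaf Rs l -> crossed M l -> exists m, same_unor l (ell m)) ->
  NoMid Rs M t.
Proof.
  intros M ell t HM Hcr Hlf Hmono Hcomp m s Hs l Hl Hon.
  assert (Hnot : exists s', ~ on_geod l (cpt M s')).
  { apply not_all_ex_not. intro Hall.
    destruct (leaf_form Rs HG l Hl) as [h [Hh Hsu]].
    destruct (leaf_form Rs HG (ell m) (Hlf m)) as [h' [Hh' Hsu']].
    destruct (Hcr m) as [C0 [C1 _]].
    assert (A1 : on_geod (act_geod h e0) (cpt M (t m))) by (eapply same_unor_on; eauto).
    assert (A2 : on_geod (act_geod h' e0) (cpt M (t m))) by (eapply same_unor_on; eauto).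
    assert (Hsu2 := L1 Rs HG h h' (cpt M (t m)) Hh Hh' (cpt_py M _ HM) A1 A2).
    assert (Hs3 : same_unor l (ell m)).
    { eapply same_unor_trans; [exact Hsu|]. eapply same_unor_trans; [exact Hsu2|]. apply same_unor_sym; auto. }
    assert (X := C1 (t m - 1) ltac:(lra)).
    assert (Y : on_geod (ell m) (cpt M (t m - 1))) by (eapply same_unor_on; [exact Hs3|apply Hall]).
    unfold right_of in X; unfold on_geod in Y; lra. }
  destruct (Hcomp l Hl (conj (ex_intro _ s Hon) Hnot)) as [m' Hm'].
  assert (Hon' : on_geod (ell m') (cpt M s)) by (eapply same_unor_on; eauto).
  destruct (Hcr m') as [D0 [D1 _]].
  destruct (Req_dec s (t m')) as [E|Hne].
  - subst s. destruct (Z_le_gt_dec m' m) as [Hle|Hgt].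
    + assert (X := mono_le t Hmono m' m Hle). lra.
    + assert (X := mono_le t Hmono (m + 1)%Z m' ltac:(lia)). lra.
  - assert (Z0 := twozero M (ell m') s (t m') HM Hne Hon' D0 (t m' - 1)).
    assert (X := D1 (t m' - 1) ltac:(lra)). unfold right_of in X. lra.
Qed.

End Main.


Lemma Go_gen3 : forall Rs, in_grp (GammaO_gens Rs) (mmul (mmul Iinv Rs) Iinv).
Proof. intros; apply in_grp_gen; simpl; tauto. Qed.
Lemma Go_R : forall Rs, in_grp (GammaO_gens Rs) Rs.
Proof. intros; apply in_grp_gen; simpl; tauto. Qed.

Lemma Go_k : forall Rs k, (k = Rs \/ k = mmul Rs Rs) -> in_grp (GammaO_gens Rs) k.
Proof. intros Rs k [->| ->]; [apply Go_R|apply in_grp_mul; apply Go_R]. Qed.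

Lemma Go_IkI : forall Rs k, (k = Rs \/ k = mmul Rs Rs) -> in_grp (GammaO_gens Rs) (mmul (mmul Iinv k) Iinv).
Proof.
  intros Rs k [->| ->]; [apply Go_gen3|].
  apply in_grp_peq with (mmul (mmul (mmul Iinv Rs) Iinv) (mmul (mmul Iinv Rs) Iinv)).
  - apply in_grp_mul; apply Go_gen3.
  - right. destruct Rs; unfold mmul, Iinv, mneg; simpl; apply mob_eq; ring.
Qed.

Theorem lemma9p1
  (Rs : mob) (p : pt) (c : geod) (M : mob) (ell : Z -> geod) (t : Z -> R) (g0 : mob) :
  (* R_* : order-3 rotation about p, permuting the sides clockwise (angle -2pi/3) *)
  is_rotation Rs p (- (2 * PI / 3)) ->
  (* the orthogonal projection of p onto e_0 is i (the fixed point of I) *)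
  (forall q, 0 < py q -> on_geod e0 q -> hcosh p pI <= hcosh p q) ->
  (* hDelta is hyperideal: its sides have pairwise disjoint closures *)
  (forall s s', In s (sides Rs) -> In s' (sides Rs) -> s <> s' -> closures_disjoint s s') ->
  (* hDelta contains Delta_0 *)
  (forall z, hDelta0 z -> hDelta Rs p z) ->
  (* c has tail and head in the limit set of Gamma_o *)
  in_limit_set (GammaO_gens Rs) (gtail c) ->
  in_limit_set (GammaO_gens Rs) (ghead c) ->
  (* M parametrizes c *)
  param_of c M ->
  (* (ell m) enumerates the leaves crossed by c, in order of crossing, each oriented
     so that c crosses it from right to left *)
  (forall m, (t m < t (m + 1)%Z)) ->
  (forall m, is_leaf Rs (ell m)) ->
  (forall m m', same_unor (ell m) (ell m') -> m = m') ->
  (forall m, crosses_RL M (ell m) (t m)) ->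
  (forall l, is_leaf Rs l -> crossed M l -> exists m, same_unor l (ell m)) ->
  (* normalization: ell_0 = gamma_0 e_0 with gamma_0 in Gamma_o *)
  in_grp (GammaO_gens Rs) g0 -> ell 0%Z = act_geod g0 e0 ->
  forall n : Z,
    (exists gn, in_grp (GammaO_gens Rs) gn /\ ell (2 * n)%Z = act_geod gn e0) /\
    (forall gn gn1, in_grp (GammaO_gens Rs) gn -> in_grp (GammaO_gens Rs) gn1 ->
       ell (2 * n)%Z = act_geod gn e0 -> ell (2 * (n + 1))%Z = act_geod gn1 e0 ->
       exists w, In w (Wset Rs) /\ peq gn1 (mmul gn w)).
Proof.
  intros Hrot Hproj Hdisj Hcont _ _ Hparam Hmono Hleaf _ Hcr Hcomp Hg0 Hell0.
  assert (HG := good_of Rs p Hrot Hproj Hdisj Hcont).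
  assert (HM : 0 < mdet M) by (destruct Hparam; auto).
  assert (Hnm := nomid_of Rs HG M ell t HM Hcr Hleaf Hmono Hcomp).
  assert (SF := stepF Rs HG M ell t HM Hcr Hleaf Hmono Hnm).
  assert (SB := stepB Rs HG M ell t HM Hcr Hleaf Hmono Hnm).
  assert (Gk : forall k, (k = Rs \/ k = mmul Rs Rs) -> in_grp (Gamma_gens Rs) k)
    by (intros k [->| ->]; [apply Gm_R|apply Gm_RR]).
  assert (F2 : forall m g, in_grp (GammaO_gens Rs) g -> ell m = act_geod g e0 ->
     exists k k', (k = Rs \/ k = mmul Rs Rs) /\ (k' = Rs \/ k' = mmul Rs Rs) /\
     ell (m + 1 + 1)%Z = act_geod (mmul (mmul g (mmul k Iinv)) (mmul k' Iinv)) e0).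
  { intros m g Hg E.
    destruct (SF m g (Go_Gm Rs g Hg) E) as [k [Hk Ek]].
    destruct (SF (m + 1)%Z (mmul g (mmul k Iinv))) as [k' [Hk' Ek']]; auto.
    { apply in_grp_mul; [apply Go_Gm; auto|apply in_grp_mul; auto using Gm_I]. }
    exists k, k'; auto. }
  assert (B2 : forall m g, in_grp (GammaO_gens Rs) g -> ell m = act_geod g e0 ->
     exists k k', (k = Rs \/ k = mmul Rs Rs) /\ (k' = Rs \/ k' = mmul Rs Rs) /\
     ell (m - 1 - 1)%Z = act_geod (mmul (mmul g (mmul Iinv k)) (mmul Iinv k')) e0).
  { intros m g Hg E.
    destruct (SB m g (Go_Gm Rs g Hg) E) as [k [Hk Ek]].
    destruct (SB (m - 1)%Z (mmul g (mmul Iinv k))) as [k' [Hk' Ek']]; auto.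
    { apply in_grp_mul; [apply Go_Gm; auto|apply in_grp_mul; auto using Gm_I]. }
    exists k, k'; auto. }
  intro n. split.
  - revert n. apply Z.peano_ind.
    + exists g0; split; auto.
    + intros n [gn [Hgn E]].
      destruct (F2 _ _ Hgn E) as [k [k' [Hk [Hk' E']]]].
      exists (mmul (mmul gn (mmul k Iinv)) (mmul k' Iinv)). split.
      * replace (mmul (mmul gn (mmul k Iinv)) (mmul k' Iinv)) with (mmul gn (mmul k (mmul (mmul Iinv k') Iinv)))
          by (rewrite !mmul_assoc; auto).
        apply in_grp_mul; auto. apply in_grp_mul; [apply Go_k; auto|apply Go_IkI; auto].
      * replace (2 * Z.succ n)%Z with (2 * n + 1 + 1)%Z by lia. auto.
    + intros n [gn [Hgn E]].
      destruct (B2 _ _ Hgn E) as [k [k' [Hk [Hk' E']]]].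
      exists (mmul (mmul gn (mmul Iinv k)) (mmul Iinv k')). split.
      * replace (mmul (mmul gn (mmul Iinv k)) (mmul Iinv k')) with (mmul gn (mmul (mmul (mmul Iinv k) Iinv) k'))
          by (rewrite !mmul_assoc; auto).
        apply in_grp_mul; auto. apply in_grp_mul; [apply Go_IkI; auto|apply Go_k; auto].
      * replace (2 * Z.pred n)%Z with (2 * n - 1 - 1)%Z by lia. auto.
  - intros gn gn1 Hgn Hgn1 E1 E2.
    destruct (F2 _ _ Hgn E1) as [k [k' [Hk [Hk' E']]]].
    replace (2 * n + 1 + 1)%Z with (2 * (n + 1))%Z in E' by lia.
    rewrite E2 in E'.
    assert (HX : in_grp (Gamma_gens Rs) (mmul (mmul gn (mmul k Iinv)) (mmul k' Iinv))).
    { repeat apply in_grp_mul; auto using Gm_I. apply Go_Gm; auto. }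
    assert (P := L3 Rs HG _ _ (Go_Gm Rs gn1 Hgn1) HX E').
    exists (mmul (mmul (mmul k Iinv) k') Iinv). split.
    + unfold Wset. destruct Hk as [->| ->]; destruct Hk' as [->| ->]; simpl; tauto.
    + eapply peq_trans; [apply peq_sym; exact P|].
      rewrite !mmul_assoc. apply peq_refl.
Qed.
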